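(* The logic $\mathbf{DL}(\partial^* )$ can simulate $\mathbf{DL}(\partial)$ with respect to addition of rules, and the logic $\mathbf{DL}(\delta^* )$ can simulate $\mathbf{DL}(\delta)$ with respect to addition of rules. Explicitly, for $(d_1,d_2)\in\{(\partial,\partial^* ),(\delta,\delta^* )\}$ and for every defeasible theory $D$, there is a defeasible theory $D'$ with the following property. For every theory $A=(\emptyset,R_A,\emptyset)$ consisting only of rules that is modular with respect to $D$ and $D'$, and for every literal $q\in\Sigma(D+A)$: - $D+A\vdash+d_1q$ iff $D'+A\vdash+d_2q$, and - $D+A\vdash-d_1q$ iff $D'+A\vdash-d_2q$.
   Context: Defeasible theories. Literals come from a language closed under negation. For a literal $q$, its complement ${\sim}q$ is $\neg p$ if $q=p$ is a proposition, and $p$ if $q=\neg p$. A defeasible theory $D=(F,R,>)$ consists of: - a set $F$ of literals (the facts); - a finite set $R$ of rules, each with a distinct label; - an acyclic binary relation $>$ on labels (the superiority relation). Each rule $r$ has a finite set $A(r)$ of body literals and a head literal. A rule is one of: - strict ($\rightarrow$); - defeasible ($\Rightarrow$); - a defeater ($\leadsto$). Notation: $R_s$ is the set of strict rules, $R_{sd}$ the set of strict or defeasible rules, and $R[q]$, $R_s[q]$, $R_{sd}[q]$ are the corresponding sets of rules with head $q$. $\Sigma(D)$ and $\Lambda(D)$ are the literals and the labels occurring in $D$. Conclusions. Conclusions have the form $\pm d\,q$ for a tag $d\in\{\Delta,\partial,\partial^*,\delta,\sigma,\delta^*,\sigma^*\}$. The conclusions of $D$ are $\bigcup_n\mathcal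 T_D\uparrow n$, where $\mathcal T_D\uparrow 0=\emptyset$ and $\mathcal T_D\uparrow(n+1)=\mathcal T_D(\mathcal T_D\uparrow n)$. We write $D\vdash\alpha$ when $\alpha$ is a conclusion of $D$. For a set $B$ of literals, ''$+dB\subseteq E$'' means $+d\,a\in E$ for all $a\in B$. The operator $\mathcal T_D$ is defined by the following clauses. $+\Delta q\in\mathcal T_D(E)$ iff $q\in F$, or some $r\in R_s[q]$ has $+\Delta A(r)\subseteq E$. $-\Delta q\in\mathcal T_D(E)$ iff $q\notin F$ and every $r\in R_s[q]$ has some $a\in A(r)$ with $-\Delta a\in E$. $+\partial q\in\mathcal T_D(E)$ iff either $+\Delta q\in E$, or all of the following hold: - some $r\in R_{sd}[q]$ has $+\partial A(r)\subseteq E$; - $-\Delta{\sim}q\in E$; - every $s\in R[{\sim}q]$ either has some $a\in A(s)$ with $-\partial a\in E$, or there is $t\in R_{sd}[q]$ with $+\partial A(t)\subseteq E$ and $t>s$. $-\partial q\in\mathcal T_D(E)$ iff $-\Delta q\in E$ and one of the following holds: - every $r\in R_{sd}[q]$ has some $a\in A(r)$ with $-\partial a\in E$; - $+\Delta{\sim}q\in E$; - some $s\in R[{\sim}q]$ has $+\partial A(s)\subseteq E$ and every $t\in R_{sd}[q]$ has some $a\in A(t)$ with $-\partial a\in E$ or not $t>s$. $+\partial^*q\in\mathcal T_D(E)$ iff either $+\Delta q\in E$, or some $r\in R_{sd}[q]$ satisfies: - $+\partial^*A(r)\subseteq E$; - $-\Delta{\sim}q\in E$; - every $s\in R[{\sim}q]$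 has some $a\in A(s)$ with $-\partial^*a\in E$, or $r>s$. $-\partial^*q\in\mathcal T_D(E)$ iff $-\Delta q\in E$ and every $r\in R_{sd}[q]$ satisfies one of: - some $a\in A(r)$ has $-\partial^*a\in E$; - $+\Delta{\sim}q\in E$; - some $s\in R[{\sim}q]$ has $+\partial^*A(s)\subseteq E$ and not $r>s$. $\pm\delta$ are defined exactly as $\pm\partial$, with $\partial$ replaced by $\delta$, with two exceptions. In the $+\delta$ clause, the escape for $s$ is ''some $a\in A(s)$ has $-\sigma a\in E$''. In the $-\delta$ clause, the condition on $s$ is ''$+\sigma A(s)\subseteq E$''. $+\sigma q\in\mathcal T_D(E)$ iff either $+\Delta q\in E$, or some $r\in R_{sd}[q]$ has $+\sigma A(r)\subseteq E$ and every $s\in R[{\sim}q]$ has some $a\in A(s)$ with $-\delta a\in E$ or not $s>r$. $-\sigma q\in\mathcal T_D(E)$ iff $-\Delta q\in E$ and every $r\in R_{sd}[q]$ has some $a\in A(r)$ with $-\sigma a\in E$, or there is $s\in R[{\sim}q]$ with $+\delta A(s)\subseteq E$ and $s>r$. $\pm\delta^*$ are defined exactly as $\pm\partial^*$, with $\partial^*$ replaced by $\delta^*$, with two exceptions. In the $+\delta^*$ clause, the escape for $s$ is ''some $a\in A(s)$ has $-\sigma^*a\in E$''. In the $-\delta^*$ clause, the condition on $s$ is ''$+\sigma^*A(s)\subseteq E$''. $\pm\sigma^*$ are defined exactly as $\pm\sigma$, with $\sigma,\delta$ replaced by $\sigma^*,\delta^*$ respectively. $\mathbf{DL}(d)$ denotes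 the logic with principal tag $d$. Addition. For theories $D=(F,R,>)$ and $A=(F',R',>')$ with disjoint label sets, define $D+A=(F\cup F',R\cup R',>\cup>')$. Given theories $D_1,D_2$, an addition $A$ is modular if - $\Sigma(A)\cap\Sigma(D_2)\subseteq\Sigma(D_1)$, - $\Lambda(D_1)\cap\Lambda(A)=\emptyset$, and - $\Lambda(D_2)\cap\Lambda(A)=\emptyset$. Simulation. $\mathbf{DL}(d_1)$ can be simulated by $\mathbf{DL}(d_2)$ with respect to addition of rules if every theory $D_1$ has a theory $D_2$ such that, for every modular addition $A$ of the form $(\emptyset,R,\emptyset)$ and every $q\in\Sigma(D_1+A)$: - $D_1+A\vdash\pm d_1q$ iff $D_2+A\vdash\pm d_2q$ (same sign). *)

(* Defs.v *)
From Stdlib Require Import List Relations.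
Import ListNotations.

(* Propositions (atoms) and rule labels are natural numbers: both are
   countably infinite, so fresh atoms/labels are always available. *)
Definition atom := nat.
Definition label := nat.

Inductive literal : Type := Pos (p : atom) | Neg (p : atom).

Definition compl (q : literal) : literal :=
  match q with Pos p => Neg p | Neg p => Pos p end.

Inductive rkind : Type := Strict | Defeasible | Defeater.

Record rule : Type := mkRule {
  rlabel : label;
  rbody  : list literal;
  rhead  : literal;
  rkd    : rkind }.

Record theory : Type := mkTheory {
  facts : list literal;
  rules : list rule;
  sup   : list (label * label) }.  (* > : (a,b) means a > b *)

Definition acyclic (s : list (label * label)) : Prop :=
  forall x, ~ clos_trans label (fun a b => In (a, b) s) x x.

Definition wf_theory (D : theory) : Prop :=
  NoDup (map rlabel (rules D)) /\ acyclic (sup D).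

Definition Sigma (D : theory) : list literal :=
  facts D ++ flat_map (fun r => rhead r :: rbody r) (rules D).
Definition Lambda (D : theory) : list label :=
  map rlabel (rules D) ++ flat_map (fun p => [fst p; snd p]) (sup D).

Definition add (D A : theory) : theory :=
  mkTheory (facts D ++ facts A) (rules D ++ rules A) (sup D ++ sup A).

Inductive tag : Type :=
  | tDelta
  | tPartial
  | tPartialS
  | tdelta
  | tsigma
  | tdeltaS
  | tsigmaS.

Inductive sign : Type := Plus | Minus.

Definition concl := (sign * tag * literal)%type.

Section Operator.
Variable D : theory.
Variable E : concl -> Prop.

Definition is_sd (r : rule) : Prop := rkd r = Strict \/ rkd r = Defeasible.
Definition inR (q : literal) (r : rule) : Prop := In r (rules D) /\ rhead r = q.
Definition inRs (q : literal) (r : rule) : Prop := inR q r /\ rkd r = Strict.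
Definition inRsd (q : literal) (r : rule) : Prop := inR q r /\ is_sd r.
Definition sgt (r s : rule) : Prop := In (rlabel r, rlabel s) (sup D).

Definition allP (s : sign) (t : tag) (r : rule) : Prop :=
  forall a, In a (rbody r) -> E (s, t, a).
Definition someM (t : tag) (r : rule) : Prop :=
  exists a, In a (rbody r) /\ E (Minus, t, a).

Definition plus_amb (t t' : tag) (q : literal) : Prop :=
  E (Plus, tDelta, q) \/
  ((exists r, inRsd q r /\ allP Plus t r) /\
   E (Minus, tDelta, compl q) /\
   (forall s, inR (compl q) s ->
      someM t' s \/ exists u, inRsd q u /\ allP Plus t u /\ sgt u s)).

Definition minus_amb (t t' : tag) (q : literal) : Prop :=
  E (Minus, tDelta, q) /\
  ((forall r, inRsd q r -> someM t r) \/
   E (Plus, tDelta, compl q) \/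
   (exists s, inR (compl q) s /\ allP Plus t' s /\
      forall u, inRsd q u -> someM t u \/ ~ sgt u s)).

Definition plus_star (t t' : tag) (q : literal) : Prop :=
  E (Plus, tDelta, q) \/
  (exists r, inRsd q r /\ allP Plus t r /\ E (Minus, tDelta, compl q) /\
     forall s, inR (compl q) s -> someM t' s \/ sgt r s).

Definition minus_star (t t' : tag) (q : literal) : Prop :=
  E (Minus, tDelta, q) /\
  (forall r, inRsd q r ->
     someM t r \/ E (Plus, tDelta, compl q) \/
     exists s, inR (compl q) s /\ allP Plus t' s /\ ~ sgt r s).

Definition plus_sup (t t' : tag) (q : literal) : Prop :=
  E (Plus, tDelta, q) \/
  (exists r, inRsd q r /\ allP Plus t r /\
     forall s, inR (compl q) s -> someM t' s \/ ~ sgt s r).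

Definition minus_sup (t t' : tag) (q : literal) : Prop :=
  E (Minus, tDelta, q) /\
  (forall r, inRsd q r ->
     someM t r \/ exists s, inR (compl q) s /\ allP Plus t' s /\ sgt s r).

Definition TD (c : concl) : Prop :=
  match c with
  | (Plus, tDelta, q) => In q (facts D) \/ exists r, inRs q r /\ allP Plus tDelta r
  | (Minus, tDelta, q) => ~ In q (facts D) /\ forall r, inRs q r -> someM tDelta r
  | (Plus, tPartial, q) => plus_amb tPartial tPartial q
  | (Minus, tPartial, q) => minus_amb tPartial tPartial q
  | (Plus, tdelta, q) => plus_amb tdelta tsigma q
  | (Minus, tdelta, q) => minus_amb tdelta tsigma q
  | (Plus, tPartialS, q) => plus_star tPartialS tPartialS q
  | (Minus, tPartialS, q) => minus_star tPartialS tPartialS q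
  | (Plus, tdeltaS, q) => plus_star tdeltaS tsigmaS q
  | (Minus, tdeltaS, q) => minus_star tdeltaS tsigmaS q
  | (Plus, tsigma, q) => plus_sup tsigma tdelta q
  | (Minus, tsigma, q) => minus_sup tsigma tdelta q
  | (Plus, tsigmaS, q) => plus_sup tsigmaS tdeltaS q
  | (Minus, tsigmaS, q) => minus_sup tsigmaS tdeltaS q
  end.
End Operator.

Fixpoint iterT (D : theory) (n : nat) : concl -> Prop :=
  match n with
  | 0 => fun _ => False
  | S m => TD D (iterT D m)
  end.

Definition proves (D : theory) (c : concl) : Prop := exists n, iterT D n c.

Definition modular (D1 D2 A : theory) : Prop :=
  (forall q, In q (Sigma A) -> In q (Sigma D2) -> In q (Sigma D1)) /\
  (forall l, In l (Lambda D1) -> ~ In l (Lambda A)) /\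
  (forall l, In l (Lambda D2) -> ~ In l (Lambda A)).

Definition simulates (d1 d2 : tag) : Prop :=
  forall D1 : theory, wf_theory D1 ->
  exists D2 : theory, wf_theory D2 /\
    forall RA : list rule,
      let A := mkTheory [] RA [] in
      wf_theory A -> modular D1 D2 A ->
      forall q, In q (Sigma (add D1 A)) ->
        (proves (add D1 A) (Plus, d1, q) <-> proves (add D2 A) (Plus, d2, q)) /\
        (proves (add D1 A) (Minus, d1, q) <-> proves (add D2 A) (Minus, d2, q)).

(* Main.v *)
Require Import Defs.
From Stdlib Require Import List Relations Lia Arith Classical ClassicalEpsilon Wellfounded.Inclusion Bool.
Import ListNotations.

Section Mono.
Variables (D : theory) (E E' : concl -> Prop).
Hypothesis H : forall c, E c -> E' c.

Lemma allP_mono s t r : allP E s t r -> allP E' s t r.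
Proof. unfold allP; eauto. Qed.
Lemma someM_mono t r : someM E t r -> someM E' t r.
Proof. unfold someM; intros [a [h1 h2]]; eauto. Qed.
Hint Resolve allP_mono someM_mono H : mono.

Lemma plus_amb_mono t t' q : plus_amb D E t t' q -> plus_amb D E' t t' q.
Proof.
  unfold plus_amb; intros [h|[[r [h1 h2]] [h3 h4]]]; [left; auto|right].
  split; [eauto with mono|split; [auto|]].
  intros s hs; destruct (h4 s hs) as [h5|[u [h6 [h7 h8]]]]; [left; eauto with mono|right; eauto 6 with mono].
Qed.
Lemma minus_amb_mono t t' q : minus_amb D E t t' q -> minus_amb D E' t t' q.
Proof.
  unfold minus_amb; intros [h0 h]; split; [auto|].
  destruct h as [h|[h|[s [h1 [h2 h3]]]]].
  - left; intros r hr; eauto with mono.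
  - right; left; auto.
  - right; right; exists s; split; auto; split; eauto with mono.
    intros u hu; destruct (h3 u hu); [left|right]; eauto with mono.
Qed.
Lemma plus_star_mono t t' q : plus_star D E t t' q -> plus_star D E' t t' q.
Proof.
  unfold plus_star; intros [h|[r [h1 [h2 [h3 h4]]]]]; [left; auto|right].
  exists r; split; [exact h1|split; [eauto with mono|split; [auto|]]].
  intros s hs; destruct (h4 s hs); [left|right]; eauto with mono.
Qed.
Lemma minus_star_mono t t' q : minus_star D E t t' q -> minus_star D E' t t' q.
Proof.
  unfold minus_star; intros [h0 h]; split; auto.
  intros r hr; destruct (h r hr) as [h1|[h1|[s [h2 [h3 h4]]]]]; eauto with mono.
  right; right; exists s; eauto with mono.
Qed.
Lemma plus_sup_mono t t' q : plus_sup D E t t' q -> plus_sup D E' t t' q.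
Proof.
  unfold plus_sup; intros [h|[r [h1 [h2 h3]]]]; [left; auto|right].
  exists r; split; [exact h1|split; [eauto with mono|]].
  intros s hs; destruct (h3 s hs); [left|right]; eauto with mono.
Qed.
Lemma minus_sup_mono t t' q : minus_sup D E t t' q -> minus_sup D E' t t' q.
Proof.
  unfold minus_sup; intros [h0 h]; split; auto.
  intros r hr; destruct (h r hr) as [h1|[s [h2 [h3 h4]]]]; eauto with mono.
  right; exists s; eauto with mono.
Qed.

Lemma TD_mono c : TD D E c -> TD D E' c.
Proof.
  destruct c as [[s t] q]; destruct s, t; simpl;
  auto using plus_amb_mono, minus_amb_mono, plus_star_mono, minus_star_mono,
    plus_sup_mono, minus_sup_mono.
  - intros [h|[r [h1 h2]]]; [left; auto|right; eauto with mono].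
  - intros [h1 h2]; split; auto. intros r hr; eauto with mono.
Qed.
End Mono.

Lemma iterT_S D n c : iterT D n c -> iterT D (S n) c.
Proof.
  revert c; induction n; simpl; intros c h; [contradiction|].
  eapply TD_mono; [|exact h]. exact IHn.
Qed.

Lemma iterT_le D n m c : n <= m -> iterT D n c -> iterT D m c.
Proof. induction 1; auto using iterT_S. Qed.

Definition relevant (D : theory) (q : literal) (c : concl) : Prop :=
  match c with (_, _, a) => a = q \/ a = compl q \/ exists r, In r (rules D) /\ In a (rbody r) end.

Section Local.
Variables (D : theory) (q : literal) (E E' : concl -> Prop).
Hypothesis H : forall c, relevant D q c -> E c -> E' c.

Lemma allP_loc s t r : In r (rules D) -> allP E s t r -> allP E' s t r.
Proof. unfold allP; intros hr h a ha; apply H; [simpl; eauto 6|auto]. Qed.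
Lemma someM_loc t r : In r (rules D) -> someM E t r -> someM E' t r.
Proof. unfold someM; intros hr [a [h1 h2]]; exists a; split; auto; apply H; [simpl; eauto 6|auto]. Qed.
Lemma Eq_loc s t : E (s,t,q) -> E' (s,t,q).
Proof. apply H; simpl; auto. Qed.
Lemma Ecq_loc s t : E (s,t,compl q) -> E' (s,t,compl q).
Proof. apply H; simpl; auto. Qed.
Hint Resolve allP_loc someM_loc Eq_loc Ecq_loc : loc.
Hint Extern 1 (In _ (rules D)) => match goal with h : inR _ _ _ |- _ => apply (proj1 h) end : loc.
Hint Unfold inRsd inRs : loc.

Ltac gi := repeat match goal with h : inRsd _ _ _ |- _ => destruct h | h : inRs _ _ _ |- _ => destruct h end.


Lemma TD_local s t : TD D E (s,t,q) -> TD D E' (s,t,q).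
Proof.
  destruct s, t; simpl;
  unfold plus_amb, minus_amb, plus_star, minus_star, plus_sup, minus_sup.
  all: try (intros [h|[r [h1 h2]]]; [left; auto with loc|right; gi; exists r; split; [split|]; eauto with loc]; fail).
  all: try (intros [h1 h2]; split; [auto with loc|intros r hr; gi; eauto with loc]; fail).
  all: try (intros [h|[[r [h1 h2]] [h3 h4]]]; [left; auto with loc|right];
    split; [gi; exists r; split; [split|]; eauto with loc|split; [auto with loc|]];
    intros s hs; destruct (h4 s hs) as [h5|[u [h6 [h7 h8]]]]; [left; eauto with loc|right; gi; exists u; split; [split|split]; eauto with loc]; fail).
  all: try (intros [h0 h]; split; [auto with loc|]; destruct h as [h|[h|[s [h1 [h2 h3]]]]];
    [left; intros r hr; gi; eauto with loc
    |right; left; auto with loc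
    |right; right; exists s; split; auto; split; [eauto with loc|];
     intros u hu; destruct (h3 u hu); [left|right]; gi; eauto with loc]; fail).
  all: try (intros [h|[r [h1 [h2 [h3 h4]]]]]; [left; auto with loc|right];
    exists r; split; auto; gi; split; [eauto with loc|split; [auto with loc|]];
    intros s hs; destruct (h4 s hs); [left|right]; eauto with loc; fail).
  all: try (intros [h0 h]; split; [auto with loc|];
    intros r hr; destruct (h r hr) as [h1|[h1|[s [h2 [h3 h4]]]]];
    [left; gi; eauto with loc|right; left; auto with loc|right; right; exists s; split; auto; split; eauto with loc]; fail).
  all: try (intros [h|[r [h1 [h2 h3]]]]; [left; auto with loc|right];
    exists r; split; auto; gi; split; [eauto with loc|];
    intros s hs; destruct (h3 s hs); [left|right]; eauto with loc; fail).
  all: try (intros [h0 h]; split; [auto with loc|];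
    intros r hr; destruct (h r hr) as [h1|[s [h2 [h3 h4]]]];
    [left; gi; eauto with loc|right; exists s; split; auto; split; eauto with loc]; fail).
Qed.
End Local.

Lemma fin_level D (L : list concl) : exists n, forall c, In c L -> proves D c -> iterT D n c.
Proof.
  induction L as [|c L [n IH]].
  - exists 0; intros c [].
  - destruct (classic (proves D c)) as [[m hm]|hn].
    + exists (max n m); intros c' [<-|hc'] hp.
      * eapply iterT_le; [|exact hm]; lia.
      * eapply iterT_le; [|apply IH; auto]; lia.
    + exists n; intros c' [<-|hc'] hp; [contradiction|auto].
Qed.

Definition all_tags := [tDelta; tPartial; tPartialS; tdelta; tsigma; tdeltaS; tsigmaS].
Lemma in_all_tags t : In t all_tags.
Proof. destruct t; simpl; tauto. Qed.
Lemma in_signs s : In s [Plus; Minus].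
Proof. destruct s; simpl; tauto. Qed.

Definition rel_list D q : list concl :=
  flat_map (fun s => flat_map (fun t => map (fun a => (s,t,a))
     (q :: compl q :: flat_map rbody (rules D))) all_tags) [Plus; Minus].

Lemma rel_list_in D q c : relevant D q c -> In c (rel_list D q).
Proof.
  destruct c as [[s t] a]; intros h; simpl in h.
  unfold rel_list. apply in_flat_map; exists s; split; [apply in_signs|].
  apply in_flat_map; exists t; split; [apply in_all_tags|].
  apply in_map_iff; exists a; split; auto.
  destruct h as [h|[h|[r [h1 h2]]]]; [left; auto|right; left; auto|right; right].
  apply in_flat_map; eauto.
Qed.

Lemma proves_closed D c : TD D (proves D) c -> proves D c.
Proof.
  destruct c as [[s t] q]; intros h.
  destruct (fin_level D (rel_list D q)) as [n hn].
  exists (S n); simpl.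
  eapply TD_local; [|exact h].
  intros c hc hp; apply hn; auto using rel_list_in.
Qed.

Lemma iterT_proves D n c : iterT D n c -> proves D c.
Proof. intros; exists n; auto. Qed.

Lemma TD_iter_proves D n c : TD D (iterT D n) c -> proves D c.
Proof. intros h; exists (S n); exact h. Qed.

Lemma filter_lt {X} (L : list X) (f g : X -> bool) :
  (forall z, f z = true -> g z = true) ->
  (exists z, In z L /\ g z = true /\ f z = false) ->
  length (filter f L) < length (filter g L).
Proof.
  intros hfg. induction L as [|a L IH]; intros [z [hz [h1 h2]]]; [destruct hz|].
  simpl. destruct hz as [<-|hz].
  - rewrite h1, h2; simpl.
    assert (length (filter f L) <= length (filter g L)).
    { clear -hfg. induction L as [|b L IH]; simpl; auto.
      destruct (f b) eqn:e; [rewrite (hfg _ e); simpl; lia|destruct (g b); simpl; lia]. }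
    lia.
  - assert (length (filter f L) < length (filter g L)) by (apply IH; eauto).
    destruct (f a) eqn:e; [rewrite (hfg _ e); simpl; lia|destruct (g a); simpl; lia].
Qed.

Section WF.
Variable s : list (label * label).
Hypothesis acy : acyclic s.
Let R := fun a b => In (a, b) s.
Let above := fun y x => clos_trans label R y x.

Definition cnt x := length (filter (fun z => if excluded_middle_informative (clos_trans label R z x) then true else false) (map fst s)).

Lemma ct_fst y x : clos_trans label R y x -> In y (map fst s).
Proof.
  induction 1 as [a b h|a b c h1 IH1 h2 IH2]; auto.
  apply in_map_iff; exists (a,b); auto.
Qed.

Lemma cnt_lt y x : clos_trans label R y x -> cnt y < cnt x.
Proof.
  intros h; unfold cnt; apply filter_lt.
  - intros z. destruct (excluded_middle_informative _) as [h1|h1]; [|discriminate].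
    intros _. destruct (excluded_middle_informative _) as [h2|h2]; auto.
    exfalso; apply h2; eapply t_trans; eauto.
  - exists y; split; [eapply ct_fst; eauto|].
    destruct (excluded_middle_informative (clos_trans label R y x)); [|contradiction].
    destruct (excluded_middle_informative (clos_trans label R y y)) as [h2|]; auto.
    exfalso; exact (acy y h2).
Qed.

Lemma above_wf : well_founded (fun y x => clos_trans label (fun a b => In (a, b) s) y x).
Proof.
  apply (wf_incl _ _ (fun y x => cnt y < cnt x)).
  - intros y x h; apply cnt_lt; exact h.
  - apply (well_founded_ltof _ cnt).
Qed.
End WF.


Definition atomof (l : literal) : atom := match l with Pos p => p | Neg p => p end.
Definition Mx (D : theory) : nat := S (list_max (Lambda D)).
Definition Nx (D : theory) : nat := S (list_max (map atomof (Sigma D))).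
Definition lab (M k i j : nat) : nat := (k * M + i) * M + j.
Definition bA (D : theory) (x : rule) : atom := Nx D + 2 * rlabel x.
Definition cA (D : theory) (x : rule) : atom := S (Nx D + 2 * rlabel x).

Definition lit_eq_dec (a b : literal) : {a = b} + {a <> b}.
Proof. decide equality; apply Nat.eq_dec. Defined.
Definition rkind_eq_dec (a b : rkind) : {a = b} + {a <> b}.
Proof. decide equality. Defined.
Definition rule_eq_dec (a b : rule) : {a = b} + {a <> b}.
Proof. decide equality; auto using lit_eq_dec, rkind_eq_dec, Nat.eq_dec, list_eq_dec. Defined.
Definition pair_eq_dec (a b : label * label) : {a = b} + {a <> b}.
Proof. decide equality; apply Nat.eq_dec. Defined.

Definition lit_eqb (a b : literal) : bool := if lit_eq_dec a b then true else false.
Definition is_sdb (r : rule) : bool := match rkd r with Defeater => false | _ => true end.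
Definition supb (D : theory) (a b : label) : bool := if in_dec pair_eq_dec (a, b) (sup D) then true else false.

Definition attackers (D : theory) (x : rule) : list rule :=
  filter (fun s => lit_eqb (rhead s) (compl (rhead x))) (rules D).

Inductive gk : Type := GE | GF | GG | GK | GM | GBT | GH.
Definition all_gk := [GE; GF; GG; GK; GM; GBT; GH].

Definition mkG (D : theory) (k : gk) (y x : rule) : rule :=
  let M := Mx D in let l := rlabel x in
  match k with
  | GE => mkRule (lab M 1 l 0) [] (Pos (bA D x)) Defeasible
  | GF => mkRule (lab M 2 l 0) (rbody x) (Neg (bA D x)) Defeasible
  | GG => mkRule (lab M 3 l 0) [] (Pos (cA D x)) Defeasible
  | GK => mkRule (lab M 4 l 0) [] (Neg (cA D x)) Defeasible
  | GM => mkRule (lab M 5 l 0)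
            (rbody x ++ Pos (cA D x) :: map (fun s => Pos (bA D s)) (attackers D x))
            (rhead x) Defeasible
  | GBT => mkRule (lab M 6 (rlabel y) l) (rbody y) (Pos (bA D x)) Defeasible
  | GH => mkRule (lab M 7 (rlabel y) l) (rbody y) (Neg (cA D x)) Defeasible
  end.

Definition condb (D : theory) (k : gk) (y x : rule) : bool :=
  match k with
  | GM => is_sdb x
  | GBT => is_sdb y && lit_eqb (rhead y) (compl (rhead x)) && supb D (rlabel y) (rlabel x)
  | GH => lit_eqb (rhead y) (compl (rhead x)) && supb D (rlabel y) (rlabel x)
  | _ => true
  end.

Definition G (D : theory) : list rule :=
  flat_map (fun x => flat_map (fun y => flat_map (fun k =>
     if condb D k y x then [mkG D k y x] else []) all_gk) (rules D)) (rules D).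

Definition newsup (D : theory) : list (label * label) :=
  let M := Mx D in
  flat_map (fun x => let l := rlabel x in
     (lab M 3 l 0, lab M 4 l 0)
     :: map (fun s => (lab M 5 l 0, rlabel s)) (rules D)
     ++ map (fun t => (lab M 6 (rlabel t) l, lab M 2 l 0)) (rules D)
     ++ map (fun s => (lab M 7 (rlabel s) l, lab M 3 l 0)) (rules D)) (rules D).

Definition D2 (D : theory) : theory :=
  mkTheory (facts D) (rules D ++ nodup rule_eq_dec (G D)) (sup D ++ newsup D).

Lemma divmod_inj M a b c d : b < M -> d < M -> a * M + b = c * M + d -> a = c /\ b = d.
Proof.
  intros hb hd h.
  assert (M <> 0) by lia.
  assert (e1 : (a * M + b) / M = a).
  { rewrite Nat.div_add_l by lia. rewrite Nat.div_small by lia. lia. }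
  assert (e2 : (c * M + d) / M = c).
  { rewrite Nat.div_add_l by lia. rewrite Nat.div_small by lia. lia. }
  assert (a = c) by (rewrite <- e1, <- e2, h; auto). subst; lia.
Qed.

Lemma lab_inj M k i j k' i' j' : i < M -> j < M -> i' < M -> j' < M ->
  lab M k i j = lab M k' i' j' -> k = k' /\ i = i' /\ j = j'.
Proof.
  unfold lab; intros h1 h2 h3 h4 e.
  apply divmod_inj in e; auto. destruct e as [e e'].
  apply divmod_inj in e; auto. lia.
Qed.

Lemma lab_ge M k i j : 1 <= k -> 1 <= M -> M <= lab M k i j.
Proof. unfold lab; intros; nia. Qed.

Lemma lab_div M k i j : i < M -> j < M -> lab M k i j / (M * M) = k.
Proof.
  intros hi hj. unfold lab.
  replace ((k * M + i) * M + j) with (k * (M * M) + (i * M + j)) by ring.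
  rewrite Nat.div_add_l by nia. rewrite Nat.div_small by nia. lia.
Qed.

Lemma le_list_max x l : In x l -> x <= list_max l.
Proof.
  induction l as [|a l IH]; simpl; [tauto|].
  intros [<-|h]; [lia|specialize (IH h); lia].
Qed.

Section Basic.
Variable D : theory.

Lemma rule_label_lt x : In x (rules D) -> rlabel x < Mx D.
Proof.
  intros h; unfold Mx; apply Nat.lt_succ_r, le_list_max.
  unfold Lambda; apply in_or_app; left; apply in_map; auto.
Qed.

Lemma sup_label_lt a b : In (a, b) (sup D) -> a < Mx D /\ b < Mx D.
Proof.
  intros h; unfold Mx; split; apply Nat.lt_succ_r, le_list_max;
  unfold Lambda; apply in_or_app; right; apply in_flat_map; exists (a,b); simpl; auto.
Qed.

Lemma sigma_atom_lt a : In a (Sigma D) -> atomof a < Nx D.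
Proof. intros h; unfold Nx; apply Nat.lt_succ_r, le_list_max, in_map; auto. Qed.

Lemma head_in_sigma x : In x (rules D) -> In (rhead x) (Sigma D).
Proof. intros h; unfold Sigma; apply in_or_app; right; apply in_flat_map; exists x; simpl; auto. Qed.
Lemma body_in_sigma x a : In x (rules D) -> In a (rbody x) -> In a (Sigma D).
Proof. intros h ha; unfold Sigma; apply in_or_app; right; apply in_flat_map; exists x; simpl; auto. Qed.
Lemma fact_in_sigma a : In a (facts D) -> In a (Sigma D).
Proof. intros h; unfold Sigma; apply in_or_app; left; auto. Qed.

Lemma M_pos : 1 <= Mx D.
Proof. unfold Mx; lia. Qed.
End Basic.

Lemma nodup_map_eq {X Y} (f : X -> Y) l x y : NoDup (map f l) -> In x l -> In y l -> f x = f y -> x = y.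
Proof.
  induction l as [|a l IH]; simpl; [tauto|].
  intros hn hx hy e. inversion hn as [|? ? hnin hn']; subst.
  destruct hx as [<-|hx], hy as [<-|hy]; auto.
  - exfalso; apply hnin; rewrite e; apply in_map; auto.
  - exfalso; apply hnin; rewrite <- e; apply in_map; auto.
Qed.

Lemma lit_eqb_true a b : lit_eqb a b = true <-> a = b.
Proof. unfold lit_eqb; destruct (lit_eq_dec a b); split; congruence. Qed.
Lemma supb_true D a b : supb D a b = true <-> In (a, b) (sup D).
Proof. unfold supb; destruct (in_dec _ _ _); split; congruence. Qed.
Lemma is_sdb_true r : is_sdb r = true <-> is_sd r.
Proof. unfold is_sdb, is_sd; destruct (rkd r); split; intuition congruence. Qed.

Lemma in_G D R : In R (G D) <-> exists x y k, In x (rules D) /\ In y (rules D) /\ condb D k y x = true /\ R = mkG D k y x.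
Proof.
  unfold G; split.
  - intros h; apply in_flat_map in h as [x [hx h]].
    apply in_flat_map in h as [y [hy h]].
    apply in_flat_map in h as [k [hk h]].
    destruct (condb D k y x) eqn:e; [|destruct h].
    destruct h as [<-|[]]; exists x, y, k; auto.
  - intros [x [y [k [hx [hy [hc ->]]]]]].
    apply in_flat_map; exists x; split; auto.
    apply in_flat_map; exists y; split; auto.
    apply in_flat_map; exists k; split; [destruct k; simpl; tauto|].
    rewrite hc; simpl; auto.
Qed.

Definition kc (k : gk) : nat :=
  match k with GE => 1 | GF => 2 | GG => 3 | GK => 4 | GM => 5 | GBT => 6 | GH => 7 end.

Section WF2.
Variable D : theory.
Hypothesis wfD : wf_theory D.
Let M := Mx D.

Lemma rules_inj x y : In x (rules D) -> In y (rules D) -> rlabel x = rlabel y -> x = y.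
Proof. intros; eapply nodup_map_eq; eauto. apply (proj1 wfD). Qed.

Lemma mkG_label k y x : In x (rules D) -> In y (rules D) ->
  exists i j, i < M /\ j < M /\ rlabel (mkG D k y x) = lab M (kc k) i j.
Proof.
  intros hx hy. pose proof (rule_label_lt D x hx). pose proof (rule_label_lt D y hy).
  pose proof (M_pos D).
  destruct k; simpl; (eexists _, _; split; [|split; [|reflexivity]]); unfold M; eauto; lia.
Qed.

Lemma G_label_ge R : In R (G D) -> M <= rlabel R.
Proof.
  intros h; apply in_G in h as [x [y [k [hx [hy [_ ->]]]]]].
  destruct (mkG_label k y x hx hy) as [i [j [_ [_ ->]]]].
  apply lab_ge; [destruct k; simpl; lia|apply M_pos].
Qed.

Lemma G_label_inj R R' : In R (G D) -> In R' (G D) -> rlabel R = rlabel R' -> R = R'.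
Proof.
  intros h h'; apply in_G in h as [x [y [k [hx [hy [_ ->]]]]]].
  apply in_G in h' as [x' [y' [k' [hx' [hy' [_ ->]]]]]].
  pose proof (rule_label_lt D x hx). pose proof (rule_label_lt D y hy).
  pose proof (rule_label_lt D x' hx'). pose proof (rule_label_lt D y' hy').
  pose proof (M_pos D).
  intros e.
  destruct k, k'; simpl in e; apply lab_inj in e; unfold M in *; try lia;
  destruct e as [_ [e1 e2]];
  repeat match goal with
  | e : rlabel ?a = rlabel ?b |- _ =>
      let h := fresh in assert (h : a = b) by (apply rules_inj; auto); subst b; clear e
  end; reflexivity.
Qed.

Lemma D2_nodup : NoDup (map rlabel (rules (D2 D))).
Proof.
  simpl; rewrite map_app; apply NoDup_app.
  - apply (proj1 wfD).
  - apply NoDup_map_NoDup_ForallPairs; [|apply NoDup_nodup].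
    intros a b ha hb; rewrite nodup_In in ha, hb; apply G_label_inj; auto.
  - intros l hl hl'. apply in_map_iff in hl as [x [<- hx]].
    apply in_map_iff in hl' as [R [e hR]]. rewrite nodup_In in hR.
    pose proof (G_label_ge R hR). pose proof (rule_label_lt D x hx). unfold M in *; lia.
Qed.

Definition phi (l : nat) : nat :=
  if l <? M then 0 else match l / (M * M) with 2 => 1 | 4 => 1 | 3 => 2 | _ => 3 end.

Lemma phi_small l : l < M -> phi l = 0.
Proof. intros h; unfold phi; destruct (Nat.ltb_spec l M); lia. Qed.

Lemma phi_lab k i j : 1 <= k -> i < M -> j < M ->
  phi (lab M k i j) = match k with 2 => 1 | 4 => 1 | 3 => 2 | _ => 3 end.
Proof.
  intros hk hi hj; unfold phi.
  pose proof (lab_ge M k i j hk (M_pos D)).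
  destruct (Nat.ltb_spec (lab M k i j) M); [unfold M in *; lia|].
  rewrite lab_div by auto. reflexivity.
Qed.

Lemma newsup_edge a b : In (a, b) (newsup D) -> phi b < phi a.
Proof.
  unfold newsup; intros h; apply in_flat_map in h as [x [hx h]].
  pose proof (rule_label_lt D x hx). pose proof (M_pos D).
  simpl in h; destruct h as [e|h].
  { inversion e; subst. rewrite !phi_lab by (unfold M in *; lia). lia. }
  apply in_app_or in h as [h|h]; [|apply in_app_or in h as [h|h]];
  apply in_map_iff in h as [s [e hs]]; inversion e; subst;
  pose proof (rule_label_lt D s hs);
  rewrite ?phi_lab by (unfold M in *; lia); rewrite ?phi_small by (unfold M in *; lia); lia.
Qed.

Lemma ct1_small a b : clos_trans label (fun a b => In (a, b) (sup D)) a b -> a < M /\ b < M.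
Proof.
  induction 1 as [a b h|a b c h1 [] h2 []]; [|split; auto].
  apply sup_label_lt; auto.
Qed.

Lemma ct2_phi a b : clos_trans label (fun a b => In (a, b) (sup (D2 D))) a b ->
  phi b < phi a \/ clos_trans label (fun a b => In (a, b) (sup D)) a b.
Proof.
  induction 1 as [a b h|a b c h1 IH1 h2 IH2].
  - simpl in h; apply in_app_or in h as [h|h]; [right; apply t_step; auto|left; apply newsup_edge; auto].
  - destruct IH1 as [i1|i1], IH2 as [i2|i2].
    + left; lia.
    + apply ct1_small in i2 as [e1 e2]; left; rewrite (phi_small c e2), (phi_small b e1) in *; lia.
    + apply ct1_small in i1 as [e1 e2]; rewrite (phi_small b e2) in i2; lia.
    + right; eapply t_trans; eauto.
Qed.

Lemma D2_acyclic : acyclic (sup (D2 D)).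
Proof.
  intros x h. apply ct2_phi in h as [h|h]; [lia|].
  exact (proj2 wfD x h).
Qed.

Lemma D2_wf : wf_theory (D2 D).
Proof. split; [apply D2_nodup|apply D2_acyclic]. Qed.
End WF2.


Lemma Pos_inj a b : Pos a = Pos b -> a = b. Proof. congruence. Qed.
Lemma Neg_inj a b : Neg a = Neg b -> a = b. Proof. congruence. Qed.
Arguments bA : simpl never.
Arguments cA : simpl never.

Section Main.
Variable D1 : theory.
Hypothesis wfD : wf_theory D1.
Variable RA : list rule.
Let A := mkTheory [] RA [].
Hypothesis wfA : wf_theory A.
Hypothesis modA : modular D1 (D2 D1) A.

Local Notation M := (Mx D1).
Local Notation N := (Nx D1).
Let D1A := add D1 A.
Let D2A := add (D2 D1) A.
Let C1 := proves D1A.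
Let C2 := proves D2A.

Definition isG (a : atom) : Prop := exists x, In x (rules D1) /\ (a = bA D1 x \/ a = cA D1 x).
Definition base (q : literal) : Prop := ~ isG (atomof q).

Definition mG (x : rule) := mkG D1 GM x x.

Lemma base_compl q : base q -> base (compl q).
Proof. destruct q; auto. Qed.

Lemma sigma1_base a : In a (Sigma D1) -> base a.
Proof.
  intros h [x [hx e]]. apply sigma_atom_lt in h. unfold bA, cA in e. lia.
Qed.

Lemma G_in_D2 R : In R (G D1) -> In R (rules (D2 D1)).
Proof. intros h; simpl; apply in_or_app; right; apply nodup_In; auto. Qed.

Lemma mkG_in_G k y x : In x (rules D1) -> In y (rules D1) -> condb D1 k y x = true -> In (mkG D1 k y x) (G D1).
Proof. intros; apply in_G; exists x, y, k; auto. Qed.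

Lemma gadget_sigma2 x : In x (rules D1) ->
  In (Pos (bA D1 x)) (Sigma (D2 D1)) /\ In (Neg (bA D1 x)) (Sigma (D2 D1)) /\
  In (Pos (cA D1 x)) (Sigma (D2 D1)) /\ In (Neg (cA D1 x)) (Sigma (D2 D1)).
Proof.
  intros hx.
  repeat split;
  [ apply (head_in_sigma (D2 D1) (mkG D1 GE x x))
  | apply (head_in_sigma (D2 D1) (mkG D1 GF x x))
  | apply (head_in_sigma (D2 D1) (mkG D1 GG x x))
  | apply (head_in_sigma (D2 D1) (mkG D1 GK x x)) ];
  apply G_in_D2, mkG_in_G; auto.
Qed.

Lemma sigmaA_base a : In a (Sigma A) -> base a.
Proof.
  intros h [x [hx e]].
  destruct (gadget_sigma2 x hx) as [h1 [h2 [h3 h4]]].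
  assert (In a (Sigma (D2 D1))) by (destruct a; simpl in e; destruct e as [e|e]; subst; auto).
  apply (proj1 modA) in h; auto.
  apply sigma1_base in h. apply h; exists x; auto.
Qed.

Lemma in_rules_D1A R : In R (rules D1A) <-> In R (rules D1) \/ In R RA.
Proof. simpl; rewrite in_app_iff; tauto. Qed.
Lemma in_rules_D2A R : In R (rules D2A) <-> In R (rules D1) \/ In R (G D1) \/ In R RA.
Proof. simpl; rewrite !in_app_iff, nodup_In; tauto. Qed.

Lemma ruleA_body_base R a : In R RA -> In a (rbody R) -> base a.
Proof. intros; apply sigmaA_base; apply (body_in_sigma A R); auto. Qed.
Lemma ruleA_head_base R : In R RA -> base (rhead R).
Proof. intros; apply sigmaA_base; apply (head_in_sigma A R); auto. Qed.
Lemma rule1_body_base R a : In R (rules D1) -> In a (rbody R) -> base a.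
Proof. intros; apply sigma1_base; apply (body_in_sigma D1 R); auto. Qed.
Lemma rule1_head_base R : In R (rules D1) -> base (rhead R).
Proof. intros; apply sigma1_base; apply (head_in_sigma D1 R); auto. Qed.

Lemma D1A_body_base R a : In R (rules D1A) -> In a (rbody R) -> base a.
Proof. rewrite in_rules_D1A; intros [h|h]; eauto using ruleA_body_base, rule1_body_base. Qed.
Lemma D1A_head_base R : In R (rules D1A) -> base (rhead R).
Proof. rewrite in_rules_D1A; intros [h|h]; eauto using ruleA_head_base, rule1_head_base. Qed.

Lemma notbase_b x : In x (rules D1) -> forall a, atomof a = bA D1 x -> ~ base a.
Proof. intros hx a e hb; apply hb; exists x; auto. Qed.
Lemma notbase_c x : In x (rules D1) -> forall a, atomof a = cA D1 x -> ~ base a.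
Proof. intros hx a e hb; apply hb; exists x; auto. Qed.

Lemma labelA_notin1 R : In R RA -> ~ In (rlabel R) (Lambda D1).
Proof.
  intros h h'; apply (proj1 (proj2 modA) _ h'). unfold Lambda; simpl.
  rewrite app_nil_r; apply in_map; auto.
Qed.
Lemma labelA_notin2 R : In R RA -> ~ In (rlabel R) (Lambda (D2 D1)).
Proof.
  intros h h'; apply (proj2 (proj2 modA) _ h'). unfold Lambda; simpl.
  rewrite app_nil_r; apply in_map; auto.
Qed.

Lemma label1_lt R : In R (rules D1) -> rlabel R < M.
Proof. apply rule_label_lt. Qed.

Lemma in_newsup a b : In (a, b) (newsup D1) -> exists x, In x (rules D1) /\
  ((a = lab M 3 (rlabel x) 0 /\ b = lab M 4 (rlabel x) 0) \/
   (exists s, In s (rules D1) /\ a = lab M 5 (rlabel x) 0 /\ b = rlabel s) \/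
   (exists t, In t (rules D1) /\ a = lab M 6 (rlabel t) (rlabel x) /\ b = lab M 2 (rlabel x) 0) \/
   (exists s, In s (rules D1) /\ a = lab M 7 (rlabel s) (rlabel x) /\ b = lab M 3 (rlabel x) 0)).
Proof.
  unfold newsup; intros h; apply in_flat_map in h as [x [hx h]]; exists x; split; auto.
  simpl in h; destruct h as [e|h]; [inversion e; subst; left; auto|right].
  apply in_app_or in h as [h|h]; [|apply in_app_or in h as [h|h]];
  apply in_map_iff in h as [s [e hs]]; inversion e; subst; eauto 10.
Qed.

Lemma newsup_in_lambda2 a b : In (a, b) (newsup D1) -> In a (Lambda (D2 D1)) /\ In b (Lambda (D2 D1)).
Proof.
  intros h; unfold Lambda; simpl; split; apply in_or_app; right;
  apply in_flat_map; exists (a, b); split; simpl; auto; apply in_or_app; right; auto.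
Qed.

Lemma sup2_in_lambda2 a b : In (a, b) (sup D2A) -> In a (Lambda (D2 D1)) /\ In b (Lambda (D2 D1)).
Proof.
  intros h; simpl in h; rewrite app_nil_r in h.
  unfold Lambda; simpl; split; apply in_or_app; right;
  apply in_flat_map; exists (a, b); split; simpl; auto.
Qed.

Ltac bnd := first [ assumption | apply label1_lt; assumption | pose proof (M_pos D1); lia
                  | apply rule_label_lt; assumption ].

Lemma lab_ne k i j k' i' j' : k <> k' -> i < M -> j < M -> i' < M -> j' < M -> lab M k i j <> lab M k' i' j'.
Proof. intros hk h1 h2 h3 h4 e; apply lab_inj in e; auto; lia. Qed.

Lemma lab_big k i j l : 1 <= k -> l < M -> lab M k i j <> l.
Proof. intros hk hl e; pose proof (lab_ge M k i j hk (M_pos D1)); lia. Qed.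

Ltac labcontra :=
  match goal with
  | e : lab M ?k ?i ?j = lab M ?k' ?i' ?j' |- _ =>
      exfalso; apply (lab_ne k i j k' i' j'); [lia|bnd|bnd|bnd|bnd|exact e]
  | e : lab M ?k ?i ?j = ?l |- _ =>
      exfalso; apply (lab_big k i j l); [lia|bnd|exact e]
  | e : ?l = lab M ?k ?i ?j |- _ =>
      exfalso; apply (lab_big k i j l); [lia|bnd|symmetry; exact e]
  | e : lab M ?k ?i ?j < M |- _ =>
      exfalso; pose proof (lab_ge M k i j ltac:(lia) (M_pos D1)); lia
  end.

Lemma sgt2_D1A R S : In R (rules D1A) -> In S (rules D1A) -> sgt D2A R S -> sgt D1A R S.
Proof.
  unfold sgt; simpl; rewrite !app_nil_r; intros hR hS h.
  apply in_app_or in h as [h|h]; auto. exfalso.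
  apply in_rules_D1A in hR as [hR|hR].
  - pose proof (label1_lt R hR).
    apply in_newsup in h as [x [hx h]].
    destruct h as [[e1 e2]|[[s [hs [e1 e2]]]|[[t [ht [e1 e2]]]|[s [hs [e1 e2]]]]]]; labcontra.
  - apply (labelA_notin2 R hR). apply newsup_in_lambda2 in h; tauto.
Qed.

Lemma sgt1_D2A R S : sgt D1A R S -> sgt D2A R S.
Proof. unfold sgt; simpl; rewrite !app_nil_r; intros; apply in_or_app; auto. Qed.

Lemma sgt1_orig R S : In R (rules D1A) -> In S (rules D1A) -> sgt D1A R S ->
  In R (rules D1) /\ In S (rules D1) /\ In (rlabel R, rlabel S) (sup D1).
Proof.
  unfold sgt; simpl; rewrite !app_nil_r; intros hR hS h.
  assert (la : In (rlabel R) (Lambda D1) /\ In (rlabel S) (Lambda D1)).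
  { unfold Lambda; split; apply in_or_app; right; apply in_flat_map; exists (rlabel R, rlabel S); simpl; auto. }
  apply in_rules_D1A in hR as [hR|hR]; [|exfalso; apply (labelA_notin1 R hR); tauto].
  apply in_rules_D1A in hS as [hS|hS]; [|exfalso; apply (labelA_notin1 S hS); tauto].
  auto.
Qed.

Lemma sgt2_A_l R S : In R RA -> ~ sgt D2A R S.
Proof. intros h h'; apply (labelA_notin2 R h); apply sup2_in_lambda2 in h'; tauto. Qed.
Lemma sgt2_A_r R S : In S RA -> ~ sgt D2A R S.
Proof. intros h h'; apply (labelA_notin2 S h); apply sup2_in_lambda2 in h'; tauto. Qed.
Lemma sgt1_A_l R S : In R RA -> ~ sgt D1A R S.
Proof. intros h h'; apply (sgt2_A_l R S h); apply sgt1_D2A; auto. Qed.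
Lemma sgt1_A_r R S : In S RA -> ~ sgt D1A R S.
Proof. intros h h'; apply (sgt2_A_r R S h); apply sgt1_D2A; auto. Qed.

Ltac newsup_cases h :=
  let x := fresh "x" in let hx := fresh "hx" in
  let s := fresh "s" in let hs := fresh "hs" in
  let e1 := fresh "e" in let e2 := fresh "e" in
  apply in_newsup in h as [x [hx h]];
  destruct h as [[e1 e2]|[[s [hs [e1 e2]]]|[[s [hs [e1 e2]]]|[s [hs [e1 e2]]]]]].

Ltac sgt_neg :=
  unfold sgt; simpl; rewrite ?app_nil_r;
  let h := fresh in intro h; apply in_app_or in h as [h|h];
  [ apply sup_label_lt in h; destruct h; labcontra
  | newsup_cases h; try labcontra ].

Lemma sgt2_mG_r R x : In x (rules D1) -> ~ sgt D2A R (mG x).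
Proof. intros hx0. sgt_neg. Qed.

Lemma sgt2_mG_l x S : In x (rules D1) -> In S (rules D1) -> sgt D2A (mG x) S.
Proof.
  intros hx hS; unfold sgt; simpl; rewrite app_nil_r; apply in_or_app; right.
  unfold newsup; apply in_flat_map; exists x; split; auto.
  right; apply in_or_app; left; apply in_map_iff; exists S; auto.
Qed.

Definition gE x := mkG D1 GE x x.
Definition gF x := mkG D1 GF x x.
Definition gG x := mkG D1 GG x x.
Definition gK x := mkG D1 GK x x.
Definition gBT y x := mkG D1 GBT y x.
Definition gH y x := mkG D1 GH y x.

Lemma sgt_GK x : In x (rules D1) -> sgt D2A (gG x) (gK x).
Proof.
  intros hx; unfold sgt; simpl; rewrite app_nil_r; apply in_or_app; right.
  unfold newsup; apply in_flat_map; exists x; simpl; auto.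
Qed.
Lemma sgt_HG y x : In x (rules D1) -> In y (rules D1) -> sgt D2A (gH y x) (gG x).
Proof.
  intros hx hy; unfold sgt; simpl; rewrite app_nil_r; apply in_or_app; right.
  unfold newsup; apply in_flat_map; exists x; split; auto. right.
  apply in_or_app; right; apply in_or_app; right; apply in_map_iff; exists y; auto.
Qed.
Lemma sgt_BTF y x : In x (rules D1) -> In y (rules D1) -> sgt D2A (gBT y x) (gF x).
Proof.
  intros hx hy; unfold sgt; simpl; rewrite app_nil_r; apply in_or_app; right.
  unfold newsup; apply in_flat_map; exists x; split; auto. right.
  apply in_or_app; right; apply in_or_app; left; apply in_map_iff; exists y; auto.
Qed.
Lemma nsgt_KG x : In x (rules D1) -> ~ sgt D2A (gK x) (gG x).
Proof. intros hx0; sgt_neg. Qed.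
Lemma nsgt_GH y x : In x (rules D1) -> In y (rules D1) -> ~ sgt D2A (gG x) (gH y x).
Proof. intros hx0 hy0; sgt_neg. Qed.
Lemma nsgt_EF x : In x (rules D1) -> ~ sgt D2A (gE x) (gF x).
Proof. intros hx0; sgt_neg. Qed.
Lemma nsgt_FE x : In x (rules D1) -> ~ sgt D2A (gF x) (gE x).
Proof. intros hx0; sgt_neg. Qed.

Lemma bA_inj x x' : In x (rules D1) -> In x' (rules D1) -> bA D1 x = bA D1 x' -> x = x'.
Proof. unfold bA; intros h h' e; apply (rules_inj D1 wfD); auto; lia. Qed.
Lemma cA_inj x x' : In x (rules D1) -> In x' (rules D1) -> cA D1 x = cA D1 x' -> x = x'.
Proof. unfold cA; intros h h' e; apply (rules_inj D1 wfD); auto; lia. Qed.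
Lemma bA_cA x x' : bA D1 x <> cA D1 x'.
Proof. unfold bA, cA; lia. Qed.

Lemma sd_def r : rkd r = Defeasible -> is_sd r.
Proof. unfold is_sd; auto. Qed.

Lemma inR1_2 q R : inR D1A q R -> inR D2A q R.
Proof.
  intros [h e]; split; auto. apply in_rules_D2A. apply in_rules_D1A in h; tauto.
Qed.


Lemma G_inR2 R : In R (G D1) -> inR D2A (rhead R) R.
Proof. intros h; split; auto; apply in_rules_D2A; auto. Qed.

Lemma inR2_mG x : In x (rules D1) -> is_sd x -> inR D2A (rhead x) (mG x).
Proof.
  intros hx hsd; apply (G_inR2 (mG x)), mkG_in_G; auto. simpl; apply is_sdb_true; auto.
Qed.

Ltac ginR k hx :=
  match goal with |- inR D2A ?q ?R =>
    let h := fresh in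
    assert (h : In R (G D1)) by (unfold gE, gF, gG, gK, gBT, gH, mG; apply mkG_in_G; auto; simpl;
       rewrite ?andb_true_iff, ?lit_eqb_true, ?supb_true, ?is_sdb_true; auto);
    exact (G_inR2 R h) end.

Lemma inR2_gE x : In x (rules D1) -> inR D2A (Pos (bA D1 x)) (gE x).
Proof. intros hx; ginR GE hx. Qed.
Lemma inR2_gF x : In x (rules D1) -> inR D2A (Neg (bA D1 x)) (gF x).
Proof. intros hx; ginR GF hx. Qed.
Lemma inR2_gG x : In x (rules D1) -> inR D2A (Pos (cA D1 x)) (gG x).
Proof. intros hx; ginR GG hx. Qed.
Lemma inR2_gK x : In x (rules D1) -> inR D2A (Neg (cA D1 x)) (gK x).
Proof. intros hx; ginR GK hx. Qed.
Lemma inR2_gBT y x : In x (rules D1) -> In y (rules D1) -> is_sd y -> rhead y = compl (rhead x) ->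
  In (rlabel y, rlabel x) (sup D1) -> inR D2A (Pos (bA D1 x)) (gBT y x).
Proof. intros hx hy h1 h2 h3; ginR GBT hx. Qed.
Lemma inR2_gH y x : In x (rules D1) -> In y (rules D1) -> rhead y = compl (rhead x) ->
  In (rlabel y, rlabel x) (sup D1) -> inR D2A (Neg (cA D1 x)) (gH y x).
Proof. intros hx hy h2 h3; ginR GH hx. Qed.

Lemma inR2_base q R : base q -> inR D2A q R ->
  inR D1A q R \/ exists x, In x (rules D1) /\ is_sd x /\ rhead x = q /\ R = mG x.
Proof.
  intros hb [h e]. apply in_rules_D2A in h as [h|[h|h]].
  - left; split; auto; apply in_rules_D1A; auto.
  - apply in_G in h as [x [y [k [hx [hy [hc ->]]]]]].
    destruct k; simpl in e; subst q;
    try (exfalso; apply hb; exists x; auto; fail).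
    right; exists x; split; auto; split; [apply is_sdb_true; exact hc|auto].
  - left; split; auto; apply in_rules_D1A; auto.
Qed.

Ltac gadget_head_elim hx e :=
  first [ discriminate e
        | injection e as e; first [ exfalso; apply (bA_cA _ _ e) | exfalso; apply (bA_cA _ _ (eq_sym e)) | idtac ] ].

Lemma inR2_nonbase_orig q R : ~ base q -> inR D2A q R -> In R (G D1).
Proof.
  intros hb [h e]. apply in_rules_D2A in h as [h|[h|h]]; auto; exfalso; apply hb; subst q.
  - apply rule1_head_base; auto.
  - apply ruleA_head_base; auto.
Qed.

Lemma notbase_bpos x : In x (rules D1) -> ~ base (Pos (bA D1 x)).
Proof. intros hx hb; apply hb; exists x; auto. Qed.
Lemma notbase_bneg x : In x (rules D1) -> ~ base (Neg (bA D1 x)).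
Proof. intros hx hb; apply hb; exists x; auto. Qed.
Lemma notbase_cpos x : In x (rules D1) -> ~ base (Pos (cA D1 x)).
Proof. intros hx hb; apply hb; exists x; auto. Qed.
Lemma notbase_cneg x : In x (rules D1) -> ~ base (Neg (cA D1 x)).
Proof. intros hx hb; apply hb; exists x; auto. Qed.

Ltac inG_destruct hx0 h :=
  let x := fresh "x" in let y := fresh "y" in let k := fresh "k" in
  let hx := fresh "hx" in let hy := fresh "hy" in let hc := fresh "hc" in
  apply in_G in h as [x [y [k [hx [hy [hc ->]]]]]];
  destruct k; simpl in *;
  match goal with
  | e : rhead x = _ |- _ => exfalso; apply (rule1_head_base x hx); rewrite e; eexists; split; [exact hx0|simpl; auto]
  | e : Pos _ = Neg _ |- _ => discriminate e
  | e : Neg _ = Pos _ |- _ => discriminate e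
  | e : Pos (bA D1 _) = Pos (cA D1 _) |- _ => apply Pos_inj in e; exfalso; exact (bA_cA _ _ e)
  | e : Pos (cA D1 _) = Pos (bA D1 _) |- _ => apply Pos_inj in e; exfalso; exact (bA_cA _ _ (eq_sym e))
  | e : Neg (bA D1 _) = Neg (cA D1 _) |- _ => apply Neg_inj in e; exfalso; exact (bA_cA _ _ e)
  | e : Neg (cA D1 _) = Neg (bA D1 _) |- _ => apply Neg_inj in e; exfalso; exact (bA_cA _ _ (eq_sym e))
  | e : Pos (bA D1 _) = Pos (bA D1 _) |- _ => apply Pos_inj in e; apply bA_inj in e; auto; subst
  | e : Neg (bA D1 _) = Neg (bA D1 _) |- _ => apply Neg_inj in e; apply bA_inj in e; auto; subst
  | e : Pos (cA D1 _) = Pos (cA D1 _) |- _ => apply Pos_inj in e; apply cA_inj in e; auto; subst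
  | e : Neg (cA D1 _) = Neg (cA D1 _) |- _ => apply Neg_inj in e; apply cA_inj in e; auto; subst
  end.

Lemma inR2_bpos x R : In x (rules D1) -> inR D2A (Pos (bA D1 x)) R ->
  R = gE x \/ exists y, In y (rules D1) /\ is_sd y /\ rhead y = compl (rhead x) /\
     In (rlabel y, rlabel x) (sup D1) /\ R = gBT y x.
Proof.
  intros hx0 h. pose proof (inR2_nonbase_orig _ _ (notbase_bpos x hx0) h) as hG.
  destruct h as [_ e]. inG_destruct hx0 hG.
  - left; reflexivity.
  - right; rewrite !andb_true_iff, lit_eqb_true, supb_true, is_sdb_true in hc.
    destruct hc as [[h1 h2] h3]; exists y; auto 10.
Qed.

Lemma inR2_bneg x R : In x (rules D1) -> inR D2A (Neg (bA D1 x)) R -> R = gF x.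
Proof.
  intros hx0 h. pose proof (inR2_nonbase_orig _ _ (notbase_bneg x hx0) h) as hG.
  destruct h as [_ e]. inG_destruct hx0 hG. reflexivity.
Qed.

Lemma inR2_cpos x R : In x (rules D1) -> inR D2A (Pos (cA D1 x)) R -> R = gG x.
Proof.
  intros hx0 h. pose proof (inR2_nonbase_orig _ _ (notbase_cpos x hx0) h) as hG.
  destruct h as [_ e]. inG_destruct hx0 hG. reflexivity.
Qed.

Lemma inR2_cneg x R : In x (rules D1) -> inR D2A (Neg (cA D1 x)) R ->
  R = gK x \/ exists y, In y (rules D1) /\ rhead y = compl (rhead x) /\
     In (rlabel y, rlabel x) (sup D1) /\ R = gH y x.
Proof.
  intros hx0 h. pose proof (inR2_nonbase_orig _ _ (notbase_cneg x hx0) h) as hG.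
  destruct h as [_ e]. inG_destruct hx0 hG.
  - left; reflexivity.
  - right; rewrite !andb_true_iff, lit_eqb_true, supb_true in hc.
    destruct hc as [h2 h3]; exists y; auto 10.
Qed.

Lemma mG_body x a : In a (rbody (mG x)) <->
  In a (rbody x) \/ a = Pos (cA D1 x) \/
  exists s, In s (rules D1) /\ rhead s = compl (rhead x) /\ a = Pos (bA D1 s).
Proof.
  unfold mG; simpl. rewrite in_app_iff; simpl. rewrite in_map_iff.
  unfold attackers. split.
  - intros [h|[h|[s [e h]]]]; auto. right; right; apply filter_In in h as [h1 h2].
    apply lit_eqb_true in h2; eauto.
  - intros [h|[h|[s [h1 [h2 h3]]]]]; auto. right; right; exists s; split; auto.
    apply filter_In; split; auto; apply lit_eqb_true; auto.
Qed.

Lemma is_sd_G R : In R (G D1) -> is_sd R.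
Proof. intros h; apply in_G in h as [x [y [k [_ [_ [_ ->]]]]]]; destruct k; apply sd_def; reflexivity. Qed.
Lemma not_strict_G R : In R (G D1) -> rkd R <> Strict.
Proof. intros h; apply in_G in h as [x [y [k [_ [_ [_ ->]]]]]]; destruct k; simpl; discriminate. Qed.

Lemma facts_D1A q : In q (facts D1A) <-> In q (facts D1).
Proof. simpl; rewrite app_nil_r; tauto. Qed.
Lemma facts_D2A q : In q (facts D2A) <-> In q (facts D1).
Proof. simpl; rewrite app_nil_r; tauto. Qed.

Lemma inRs_eq q r : base q -> (inRs D2A q r <-> inRs D1A q r).
Proof.
  intros hb; unfold inRs; split.
  - intros [h hs]; destruct (inR2_base q r hb h) as [h'|[x [hx [_ [_ ->]]]]]; auto.
    discriminate hs.
  - intros [h hs]; split; auto; apply inR1_2; auto.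
Qed.

Lemma gadget_noplusDelta n q : ~ base q -> ~ iterT D2A n (Plus, tDelta, q).
Proof.
  intros hb; destruct n; simpl; [tauto|].
  intros [h|[r [[h hs] _]]].
  - apply hb, sigma1_base, fact_in_sigma, facts_D2A; auto.
  - apply (not_strict_G r); auto. eapply inR2_nonbase_orig; eauto.
Qed.

Lemma gadget_minusDelta n q : ~ base q -> iterT D2A (S n) (Minus, tDelta, q).
Proof.
  intros hb; simpl; split.
  - intros h; apply hb, sigma1_base, fact_in_sigma, facts_D2A; auto.
  - intros r [h hs]; exfalso; apply (not_strict_G r); auto. eapply inR2_nonbase_orig; eauto.
Qed.

Lemma delta_eq n : forall q s, base q -> (iterT D1A n (s, tDelta, q) <-> iterT D2A n (s, tDelta, q)).
Proof.
  induction n as [|n IH]; intros q s hb; [simpl; tauto|].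
  destruct s; simpl.
  - rewrite ?app_nil_r. split; intros [h|[r [h1 h2]]]; auto; right; exists r.
    + split; [apply inRs_eq; auto|]. intros a ha; apply IH; [|apply h2; auto].
      eapply D1A_body_base; [apply (proj1 (proj1 h1))|exact ha].
    + apply inRs_eq in h1; auto. split; auto. intros a ha; apply IH; [|apply h2; auto].
      eapply D1A_body_base; [apply (proj1 (proj1 h1))|exact ha].
  - rewrite ?app_nil_r. split; intros [h1 h2]; split; auto; intros r hr.
    + apply inRs_eq in hr; auto. destruct (h2 r hr) as [a [ha1 ha2]]; exists a; split; auto.
      apply IH; auto. eapply D1A_body_base; [apply (proj1 (proj1 hr))|exact ha1].
    + assert (hr' := hr). apply (inRs_eq q r hb) in hr'.
      destruct (h2 r hr') as [a [ha1 ha2]]; exists a; split; auto.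
      apply IH; auto. eapply D1A_body_base; [apply (proj1 (proj1 hr))|exact ha1].
Qed.

Lemma delta_C q s : base q -> (C1 (s, tDelta, q) <-> C2 (s, tDelta, q)).
Proof.
  intros hb; split; intros [n h]; exists n; apply (delta_eq n q s hb); auto.
Qed.

Lemma gadget_minusDelta_C q : ~ base q -> C2 (Minus, tDelta, q).
Proof. intros hb; exists 1; apply gadget_minusDelta; auto. Qed.
Lemma gadget_noplusDelta_C q : ~ base q -> ~ C2 (Plus, tDelta, q).
Proof. intros hb [n h]; exact (gadget_noplusDelta n q hb h). Qed.

Lemma inRsd2_G q R : inR D2A q R -> In R (G D1) -> inRsd D2A q R.
Proof. intros h hG; split; auto; apply is_sd_G; auto. Qed.

Section StarGadgets.
Variables T T' : tag.
Hypothesis HP : forall E a, plus_star D2A E T T' a -> TD D2A E (Plus, T, a).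
Hypothesis HM : forall E a, minus_star D2A E T T' a -> TD D2A E (Minus, T, a).

Lemma GcP_star x : In x (rules D1) ->
  (forall s, In s (rules D1) -> rhead s = compl (rhead x) -> In (rlabel s, rlabel x) (sup D1) -> someM C2 T' s) ->
  C2 (Plus, T, Pos (cA D1 x)).
Proof.
  intros hx h. apply proves_closed, HP. right. exists (gG x). split; [split; [apply inR2_gG; auto|apply sd_def; reflexivity]|].
  split; [intros a []|]. split; [apply gadget_minusDelta_C, notbase_cneg; auto|].
  intros S hS. apply inR2_cneg in hS as [->|[y [hy [h1 [h2 ->]]]]]; auto.
  - right; apply sgt_GK; auto.
  - left; apply (h y); auto.
Qed.

Lemma GcM_star x : In x (rules D1) ->
  (exists s, In s (rules D1) /\ rhead s = compl (rhead x) /\ In (rlabel s, rlabel x) (sup D1) /\ allP C2 Plus T' s) ->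
  C2 (Minus, T, Pos (cA D1 x)).
Proof.
  intros hx [s [hs [h1 [h2 h3]]]]. apply proves_closed, HM. split; [apply gadget_minusDelta_C, notbase_cpos; auto|].
  intros r [hr _]. apply inR2_cpos in hr as ->; auto.
  right; right; exists (gH s x). split; [apply inR2_gH; auto|]. split; [exact h3|].
  apply nsgt_GH; auto.
Qed.

Lemma GbP_star x : In x (rules D1) ->
  (someM C2 T' x \/ exists y, In y (rules D1) /\ is_sd y /\ rhead y = compl (rhead x) /\
      In (rlabel y, rlabel x) (sup D1) /\ allP C2 Plus T y) ->
  C2 (Plus, T, Pos (bA D1 x)).
Proof.
  intros hx [h|[y [hy [h1 [h2 [h3 h4]]]]]]; apply proves_closed, HP; right.
  - exists (gE x). split; [split; [apply inR2_gE; auto|apply sd_def; reflexivity]|].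
    split; [intros a []|]. split; [apply gadget_minusDelta_C, notbase_bneg; auto|].
    intros S hS; apply inR2_bneg in hS as ->; auto.
  - exists (gBT y x). split; [split; [apply inR2_gBT; auto|apply sd_def; reflexivity]|].
    split; [exact h4|]. split; [apply gadget_minusDelta_C, notbase_bneg; auto|].
    intros S hS; apply inR2_bneg in hS as ->; auto. right; apply sgt_BTF; auto.
Qed.

Lemma GbM_star x : In x (rules D1) ->
  allP C2 Plus T' x ->
  (forall y, In y (rules D1) -> is_sd y -> rhead y = compl (rhead x) ->
      In (rlabel y, rlabel x) (sup D1) -> someM C2 T y) ->
  C2 (Minus, T, Pos (bA D1 x)).
Proof.
  intros hx h1 h2. apply proves_closed, HM. split; [apply gadget_minusDelta_C, notbase_bpos; auto|].
  intros r [hr _]. apply inR2_bpos in hr as [->|[y [hy [g1 [g2 [g3 ->]]]]]]; auto.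
  - right; right; exists (gF x). split; [apply inR2_gF; auto|]. split; [exact h1|].
    apply nsgt_EF; auto.
  - left; apply (h2 y); auto.
Qed.
End StarGadgets.

Lemma GcP_sup x : In x (rules D1) ->
  (forall s, In s (rules D1) -> rhead s = compl (rhead x) -> In (rlabel s, rlabel x) (sup D1) -> someM C2 tdeltaS s) ->
  C2 (Plus, tsigmaS, Pos (cA D1 x)).
Proof.
  intros hx h. apply proves_closed. simpl. right. exists (gG x). split; [split; [apply inR2_gG; auto|apply sd_def; reflexivity]|].
  split; [intros a []|].
  intros S hS. apply inR2_cneg in hS as [->|[y [hy [h1 [h2 ->]]]]]; auto.
  - right; apply nsgt_KG; auto.
  - left; apply (h y); auto.
Qed.

Lemma GcM_sup x : In x (rules D1) ->
  (exists s, In s (rules D1) /\ rhead s = compl (rhead x) /\ In (rlabel s, rlabel x) (sup D1) /\ allP C2 Plus tdeltaS s) ->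
  C2 (Minus, tsigmaS, Pos (cA D1 x)).
Proof.
  intros hx [s [hs [h1 [h2 h3]]]]. apply proves_closed. simpl. split; [apply gadget_minusDelta_C, notbase_cpos; auto|].
  intros r [hr _]. apply inR2_cpos in hr as ->; auto.
  right; exists (gH s x). split; [apply inR2_gH; auto|]. split; [exact h3|].
  apply sgt_HG; auto.
Qed.

Lemma GbP_sup x : In x (rules D1) -> C2 (Plus, tsigmaS, Pos (bA D1 x)).
Proof.
  intros hx. apply proves_closed; simpl; right.
  exists (gE x). split; [split; [apply inR2_gE; auto|apply sd_def; reflexivity]|].
  split; [intros a []|].
  intros S hS; apply inR2_bneg in hS as ->; auto. right; apply nsgt_FE; auto.
Qed.

Lemma compl_compl q : compl (compl q) = q.
Proof. destruct q; reflexivity. Qed.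

Lemma tr_someM (P Q : concl -> Prop) t1 t2 R :
  (forall a, base a -> P (Minus, t1, a) -> Q (Minus, t2, a)) ->
  In R (rules D1A) -> someM P t1 R -> someM Q t2 R.
Proof. intros h hR [a [ha1 ha2]]; exists a; split; auto; apply h; auto; eapply D1A_body_base; eauto. Qed.
Lemma tr_allP (P Q : concl -> Prop) t1 t2 R :
  (forall a, base a -> P (Plus, t1, a) -> Q (Plus, t2, a)) ->
  In R (rules D1A) -> allP P Plus t1 R -> allP Q Plus t2 R.
Proof. intros h hR h1 a ha; apply h; auto; eapply D1A_body_base; eauto. Qed.

Lemma in1_D1A R : In R (rules D1) -> In R (rules D1A).
Proof. intros; apply in_rules_D1A; auto. Qed.
Lemma inA_D1A R : In R RA -> In R (rules D1A).
Proof. intros; apply in_rules_D1A; auto. Qed.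
Lemma inR1_of_orig q R : In R (rules D1) -> rhead R = q -> inR D1A q R.
Proof. intros; split; auto; apply in1_D1A; auto. Qed.

Lemma mG_sd x : is_sd (mG x).
Proof. apply sd_def; reflexivity. Qed.
Lemma mG_body_orig x a : In a (rbody x) -> In a (rbody (mG x)).
Proof. intros; apply mG_body; auto. Qed.
Lemma mG_body_c x : In (Pos (cA D1 x)) (rbody (mG x)).
Proof. apply mG_body; auto. Qed.
Lemma someM_mG P t x : someM P t x -> someM P t (mG x).
Proof. intros [a [h1 h2]]; exists a; split; auto; apply mG_body_orig; auto. Qed.

Lemma up_ind (P : rule -> Prop) :
  (forall w, In w (rules D1) ->
     (forall w', In w' (rules D1) -> clos_trans label (fun a b => In (a, b) (sup D1)) (rlabel w') (rlabel w) -> P w') -> P w) ->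
  forall w, In w (rules D1) -> P w.
Proof.
  intros H w. remember (rlabel w) as l. revert w Heql.
  induction l as [l IH] using (well_founded_induction (above_wf _ (proj2 wfD))).
  intros w -> hw. apply H; auto. intros w' hw' hc. eapply IH; eauto.
Qed.

Section Fwd.
Variables t t' u u' : tag.
Variable E1 : concl -> Prop.
Hypothesis Ht : forall s a, base a -> E1 (s, t, a) -> C2 (s, u, a).
Hypothesis Ht' : forall s a, base a -> E1 (s, t', a) -> C2 (s, u', a).
Hypothesis HD : forall s a, base a -> E1 (s, tDelta, a) -> C2 (s, tDelta, a).
Hypothesis HcP : forall x, In x (rules D1) ->
  (forall s, In s (rules D1) -> rhead s = compl (rhead x) -> In (rlabel s, rlabel x) (sup D1) -> someM C2 u' s) ->
  C2 (Plus, u, Pos (cA D1 x)).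
Hypothesis HcM' : forall x, In x (rules D1) ->
  (exists s, In s (rules D1) /\ rhead s = compl (rhead x) /\ In (rlabel s, rlabel x) (sup D1) /\ allP C2 Plus u s) ->
  C2 (Minus, u', Pos (cA D1 x)).
Hypothesis HbP : forall x, In x (rules D1) ->
  (someM C2 u' x \/ exists y, In y (rules D1) /\ is_sd y /\ rhead y = compl (rhead x) /\
      In (rlabel y, rlabel x) (sup D1) /\ allP C2 Plus u y) ->
  C2 (Plus, u, Pos (bA D1 x)).
Hypothesis HbM : forall x, In x (rules D1) ->
  allP C2 Plus u' x ->
  (forall y, In y (rules D1) -> is_sd y -> rhead y = compl (rhead x) ->
      In (rlabel y, rlabel x) (sup D1) -> someM C2 u y) ->
  C2 (Minus, u, Pos (bA D1 x)).
Hypothesis HPu : forall E a, plus_star D2A E u u' a -> TD D2A E (Plus, u, a).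
Hypothesis HMu : forall E a, minus_star D2A E u u' a -> TD D2A E (Minus, u, a).

Lemma tsM' R : In R (rules D1A) -> someM E1 t' R -> someM C2 u' R.
Proof. apply tr_someM; intros; apply Ht'; auto. Qed.
Lemma tsM R : In R (rules D1A) -> someM E1 t R -> someM C2 u R.
Proof. apply tr_someM; intros; apply Ht; auto. Qed.
Lemma taP R : In R (rules D1A) -> allP E1 Plus t R -> allP C2 Plus u R.
Proof. apply tr_allP; intros; apply Ht; auto. Qed.
Lemma taP' R : In R (rules D1A) -> allP E1 Plus t' R -> allP C2 Plus u' R.
Proof. apply tr_allP; intros; apply Ht'; auto. Qed.

Lemma FP q : base q -> plus_amb D1A E1 t t' q -> C2 (Plus, u, q).
Proof.
  intros hb [h|[[r0 [hr0 har0]] [hD H4]]].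
  { apply proves_closed, HPu; left; apply HD; auto. }
  assert (hbc : base (compl q)) by (apply base_compl; auto).
  destruct (classic (exists w, In w (rules D1) /\ is_sd w /\ rhead w = q /\ allP E1 Plus t w)) as [[w0 [hw0 [hw1 [hw2 hw3]]]]|hno].
  -
    assert (chain : forall w, In w (rules D1) -> is_sd w -> rhead w = q -> allP E1 Plus t w ->
      exists r, In r (rules D1) /\ is_sd r /\ rhead r = q /\ allP E1 Plus t r /\
        forall s, In s (rules D1) -> rhead s = compl q -> In (rlabel s, rlabel r) (sup D1) -> someM E1 t' s).
    { apply (up_ind (fun w => is_sd w -> rhead w = q -> allP E1 Plus t w -> _)).
      intros w hw IH g1 g2 g3.
      destruct (classic (exists s, In s (rules D1) /\ rhead s = compl q /\ In (rlabel s, rlabel w) (sup D1) /\ ~ someM E1 t' s))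
        as [[s [hs [e1 [e2 e3]]]]|hn].
      - destruct (H4 s (inR1_of_orig _ _ hs e1)) as [h|[w' [[hw' hsd'] [hap hgt]]]]; [contradiction|].
        destruct (sgt1_orig w' s (proj1 hw') (in1_D1A _ hs) hgt) as [hw'1 [_ hw'3]].
        apply (IH w'); auto; [|apply (proj2 hw')].
        eapply t_trans; apply t_step; eauto.
      - exists w; repeat split; auto. intros s hs e1 e2.
        destruct (classic (someM E1 t' s)); auto. exfalso; apply hn; eauto 10. }
    destruct (chain w0 hw0 hw1 hw2 hw3) as [r [hr [hrsd [hrq [hra hrtop]]]]].
    apply proves_closed, HPu; right; exists (mG r).
    split; [split; [rewrite <- hrq; apply inR2_mG; auto|apply mG_sd]|].
    split.
    { intros a ha; apply mG_body in ha as [ha|[->|[s [hs [e ->]]]]].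
      - apply (taP r (in1_D1A _ hr) hra); auto.
      - apply HcP; auto. rewrite hrq; intros s hs e1 e2; apply tsM'; [apply in1_D1A; auto|]. apply hrtop; auto.
      - apply HbP; auto. rewrite hrq in e.
        destruct (H4 s (inR1_of_orig _ _ hs e)) as [h|[w' [[hw' hsd'] [hap hgt]]]].
        + left; apply tsM'; auto; apply in1_D1A; auto.
        + destruct (sgt1_orig w' s (proj1 hw') (in1_D1A _ hs) hgt) as [hw'1 [_ hw'3]].
          right; exists w'; repeat split; auto.
          * rewrite e, compl_compl; apply (proj2 hw').
          * apply taP; auto; apply in1_D1A; auto. }
    split; [apply HD; auto|].
    intros S hS. apply inR2_base in hS as [hS|[x [hx [hxsd [hxq ->]]]]]; auto.
    + pose proof (proj1 hS) as hS0; apply in_rules_D1A in hS0; destruct hS0 as [hS1|hS1].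
      * right; apply sgt2_mG_l; auto.
      * destruct (H4 S hS) as [h|[w' [[hw' _] [_ hgt]]]].
        -- left; apply tsM'; auto; apply inA_D1A; auto.
        -- exfalso; exact (sgt1_A_r _ _ hS1 hgt).
    + left. destruct (H4 x (inR1_of_orig _ _ hx hxq)) as [h|[w' [[hw' hsd'] [hap hgt]]]].
      * apply someM_mG, tsM'; auto; apply in1_D1A; auto.
      * destruct (sgt1_orig w' x (proj1 hw') (in1_D1A _ hx) hgt) as [hw'1 [_ hw'3]].
        exists (Pos (cA D1 x)); split; [apply mG_body_c|].
        apply HcM'; auto. exists w'; repeat split; auto.
        -- rewrite hxq, compl_compl; apply (proj2 hw').
        -- apply taP; auto; apply in1_D1A; auto.
  - apply proves_closed, HPu; right; exists r0.
    split; [destruct hr0 as [hr0 hsd]; split; auto; apply inR1_2; auto|].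
    split; [apply taP; auto; apply (proj1 (proj1 hr0))|].
    split; [apply HD; auto|].
    intros S hS. apply inR2_base in hS as [hS|[x [hx [hxsd [hxq ->]]]]]; auto.
    + destruct (H4 S hS) as [h|[w' [[hw' hsd'] [hap hgt]]]].
      * left; apply tsM'; auto; apply (proj1 hS).
      * exfalso; destruct (sgt1_orig w' S (proj1 hw') (proj1 hS) hgt) as [hw'1 _].
        apply hno; exists w'; repeat split; auto; apply (proj2 hw').
    + left. destruct (H4 x (inR1_of_orig _ _ hx hxq)) as [h|[w' [[hw' hsd'] [hap hgt]]]].
      * apply someM_mG, tsM'; auto; apply in1_D1A; auto.
      * exfalso; destruct (sgt1_orig w' x (proj1 hw') (in1_D1A _ hx) hgt) as [hw'1 _].
        apply hno; exists w'; repeat split; auto; apply (proj2 hw').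
Qed.

Lemma bpos_in_mG x s : In s (rules D1) -> rhead s = compl (rhead x) -> In (Pos (bA D1 s)) (rbody (mG x)).
Proof. intros; apply mG_body; right; right; eauto. Qed.

Lemma sgt1_of_sup R S : In (rlabel R, rlabel S) (sup D1) -> sgt D1A R S.
Proof. unfold sgt; simpl; rewrite app_nil_r; auto. Qed.

Lemma FM q : base q -> minus_amb D1A E1 t t' q -> C2 (Minus, u, q).
Proof.
  intros hb [hD H].
  assert (hbc : base (compl q)) by (apply base_compl; auto).
  apply proves_closed, HMu; split; [apply HD; auto|].
  intros R [hR hRsd]. apply inR2_base in hR as [hR|[x [hx [hxsd [hxq ->]]]]]; auto.
  - destruct H as [H|[H|[s [hs [hsa hsw]]]]].
    + left; apply tsM; [apply (proj1 hR)|]. apply H; split; auto.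
    + right; left; apply HD; auto.
    + destruct (classic (sgt D2A R s)) as [hg|hg].
      * apply sgt2_D1A in hg; [|apply (proj1 hR)|apply (proj1 hs)].
        destruct (hsw R (conj hR hRsd)) as [h|h]; [left; apply tsM; auto; apply (proj1 hR)|contradiction].
      * right; right; exists s; split; [apply inR1_2; auto|]. split; auto.
        apply taP'; auto; apply (proj1 hs).
  - destruct H as [H|[H|[s [hs [hsa hsw]]]]].
    + left; apply someM_mG, tsM; [apply in1_D1A; auto|]. apply H; split; auto. apply inR1_of_orig; auto.
    + right; left; apply HD; auto.
    + pose proof (proj1 hs) as hs0; apply in_rules_D1A in hs0 as [hs1|hs1].
      * left. exists (Pos (bA D1 s)); split.
        { apply bpos_in_mG; auto. rewrite hxq; apply (proj2 hs). }
        apply HbM; auto.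
        { apply taP'; auto; apply (proj1 hs). }
        intros y hy hysd e1 e2.
        assert (hyq : rhead y = q) by (rewrite e1, (proj2 hs), compl_compl; auto).
        destruct (hsw y (conj (inR1_of_orig _ _ hy hyq) hysd)) as [h|h].
        -- apply tsM; auto; apply in1_D1A; auto.
        -- exfalso; apply h; apply sgt1_of_sup; auto.
      * right; right; exists s; split; [apply inR1_2; auto|]. split.
        { apply taP'; auto; apply (proj1 hs). }
        apply sgt2_A_r; auto.
Qed.
End Fwd.

Section FwdSig.
Variable E1 : concl -> Prop.
Hypothesis Hs : forall s a, base a -> E1 (s, tsigma, a) -> C2 (s, tsigmaS, a).
Hypothesis Hd : forall s a, base a -> E1 (s, tdelta, a) -> C2 (s, tdeltaS, a).
Hypothesis HD : forall s a, base a -> E1 (s, tDelta, a) -> C2 (s, tDelta, a).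

Lemma sPa R : In R (rules D1A) -> allP E1 Plus tsigma R -> allP C2 Plus tsigmaS R.
Proof. apply tr_allP; intros; apply Hs; auto. Qed.
Lemma sMa R : In R (rules D1A) -> someM E1 tsigma R -> someM C2 tsigmaS R.
Proof. apply tr_someM; intros; apply Hs; auto. Qed.
Lemma dPa R : In R (rules D1A) -> allP E1 Plus tdelta R -> allP C2 Plus tdeltaS R.
Proof. apply tr_allP; intros; apply Hd; auto. Qed.
Lemma dMa R : In R (rules D1A) -> someM E1 tdelta R -> someM C2 tdeltaS R.
Proof. apply tr_someM; intros; apply Hd; auto. Qed.

Lemma FSP q : base q -> plus_sup D1A E1 tsigma tdelta q -> C2 (Plus, tsigmaS, q).
Proof.
  intros hb [h|[r [[hr hrsd] [hra H]]]].
  { apply proves_closed; simpl; left; apply HD; auto. }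
  pose proof (proj1 hr) as hr0; apply in_rules_D1A in hr0 as [hr1|hr1].
  - apply proves_closed; simpl; right; exists (mG r).
    split; [split; [destruct hr as [_ <-]; apply inR2_mG; auto|apply mG_sd]|].
    split.
    + intros a ha; apply mG_body in ha as [ha|[->|[s [hs [e ->]]]]].
      * apply (sPa r (in1_D1A _ hr1) hra); auto.
      * apply GcP_sup; auto. intros s hs e1 e2.
        destruct (H s) as [h|h].
        -- apply inR1_of_orig; auto. rewrite e1, (proj2 hr); auto.
        -- apply dMa; auto; apply in1_D1A; auto.
        -- exfalso; apply h, sgt1_of_sup; auto.
      * apply GbP_sup; auto.
    + intros S _; right; apply sgt2_mG_r; auto.
  - apply proves_closed; simpl; right; exists r.
    split; [split; [apply inR1_2; auto|auto]|].
    split; [apply sPa; auto; apply (proj1 hr)|].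
    intros S _; right; apply sgt2_A_r; auto.
Qed.

Lemma FSM q : base q -> minus_sup D1A E1 tsigma tdelta q -> C2 (Minus, tsigmaS, q).
Proof.
  intros hb [hD H].
  apply proves_closed; simpl; split; [apply HD; auto|].
  intros R [hR hRsd]. apply inR2_base in hR as [hR|[x [hx [hxsd [hxq ->]]]]]; auto.
  - destruct (H R (conj hR hRsd)) as [h|[s [hs [hsa hsg]]]].
    + left; apply sMa; auto; apply (proj1 hR).
    + right; exists s; split; [apply inR1_2; auto|]. split; [|apply sgt1_D2A; auto].
      apply dPa; auto; apply (proj1 hs).
  - destruct (H x (conj (inR1_of_orig _ _ hx hxq) hxsd)) as [h|[s [hs [hsa hsg]]]].
    + left; apply someM_mG, sMa; auto; apply in1_D1A; auto.
    + left; exists (Pos (cA D1 x)); split; [apply mG_body_c|].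
      destruct (sgt1_orig s x (proj1 hs) (in1_D1A _ hx) hsg) as [hs1 [_ hs3]].
      apply GcM_sup; auto. exists s; repeat split; auto.
      * rewrite (proj2 hs), hxq; auto.
      * apply dPa; auto; apply (proj1 hs).
Qed.
End FwdSig.

Section Bwd.
Variables t t' u u' : tag.
Variable E : concl -> Prop.
Hypothesis Hu : forall s a, base a -> E (s, u, a) -> C1 (s, t, a).
Hypothesis Hu' : forall s a, base a -> E (s, u', a) -> C1 (s, t', a).
Hypothesis HD : forall s a, base a -> E (s, tDelta, a) -> C1 (s, tDelta, a).
Hypothesis HbP : forall x, In x (rules D1) -> E (Plus, u, Pos (bA D1 x)) ->
  someM C1 t' x \/ exists y, In y (rules D1) /\ is_sd y /\ rhead y = compl (rhead x) /\
      In (rlabel y, rlabel x) (sup D1) /\ allP C1 Plus t y.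
Hypothesis HbM : forall x, In x (rules D1) -> E (Minus, u, Pos (bA D1 x)) ->
  allP C1 Plus t' x /\ forall y, In y (rules D1) -> is_sd y -> rhead y = compl (rhead x) ->
      In (rlabel y, rlabel x) (sup D1) -> someM C1 t y.
Hypothesis HcP' : forall x, In x (rules D1) -> E (Plus, u', Pos (cA D1 x)) ->
  forall y, In y (rules D1) -> rhead y = compl (rhead x) -> In (rlabel y, rlabel x) (sup D1) -> someM C1 t y.
Hypothesis HcM : forall x, In x (rules D1) -> E (Minus, u, Pos (cA D1 x)) ->
  exists y, In y (rules D1) /\ rhead y = compl (rhead x) /\ In (rlabel y, rlabel x) (sup D1) /\ allP C1 Plus t' y.

Lemma bsM R : In R (rules D1A) -> someM E u R -> someM C1 t R.
Proof. apply tr_someM; intros; apply Hu; auto. Qed.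
Lemma bsM' R : In R (rules D1A) -> someM E u' R -> someM C1 t' R.
Proof. apply tr_someM; intros; apply Hu'; auto. Qed.
Lemma baP R : In R (rules D1A) -> allP E Plus u R -> allP C1 Plus t R.
Proof. apply tr_allP; intros; apply Hu; auto. Qed.
Lemma baP' R : In R (rules D1A) -> allP E Plus u' R -> allP C1 Plus t' R.
Proof. apply tr_allP; intros; apply Hu'; auto. Qed.

Lemma allP_mG P s tg x : allP P s tg (mG x) -> allP P s tg x.
Proof. intros h a ha; apply h, mG_body_orig; auto. Qed.

Lemma BP q : base q -> plus_star D2A E u u' q -> plus_amb D1A C1 t t' q.
Proof.
  intros hb [h|[R [[hR hRsd] [hRa [hD H]]]]]; [left; apply HD; auto|].
  assert (hbc : base (compl q)) by (apply base_compl; auto).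
  right. apply inR2_base in hR as [hR|[x [hx [hxsd [hxq ->]]]]]; auto.
  - split; [exists R; split; [split; auto|apply baP; auto; apply (proj1 hR)]|].
    split; [apply HD; auto|].
    intros s hs. destruct (H s (inR1_2 _ _ hs)) as [h|h].
    + left; apply bsM'; auto; apply (proj1 hs).
    + right; exists R; split; [split; auto|]. split; [apply baP; auto; apply (proj1 hR)|].
      apply sgt2_D1A; auto; [apply (proj1 hR)|apply (proj1 hs)].
  - split; [exists x; split; [split; auto; apply inR1_of_orig; auto|]|].
    { apply baP; [apply in1_D1A; auto|]. apply allP_mG; auto. }
    split; [apply HD; auto|].
    intros s hs. pose proof (proj1 hs) as hs0; apply in_rules_D1A in hs0 as [hs1|hs1].
    + assert (hsx : rhead s = compl (rhead x)) by (rewrite hxq; apply (proj2 hs)).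
      destruct (HbP s hs1) as [h|[y [hy [hysd [hyh [hyx hya]]]]]].
      * apply hRa, bpos_in_mG; auto.
      * left; auto.
      * right; exists y. split; [split; auto; apply inR1_of_orig; auto; rewrite hyh, hsx, compl_compl; auto|].
        split; auto. apply sgt1_of_sup; auto.
    + destruct (H s (inR1_2 _ _ hs)) as [h|h].
      * left; apply bsM'; auto; apply (proj1 hs).
      * exfalso; exact (sgt2_A_r _ _ hs1 h).
Qed.

Section BMq.
Variable q : literal.
Hypothesis hb : base q.
Let G3 := exists s, inR D1A (compl q) s /\ allP C1 Plus t' s /\
   forall w, inRsd D1A q w -> someM C1 t w \/ ~ sgt D1A w s.

Lemma X1 S : inR D1A (compl q) S -> allP C1 Plus t' S ->
  (forall w, In w (rules D1) -> is_sd w -> rhead w = q -> sgt D1A w S -> someM C1 t w) -> G3.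
Proof.
  intros hS hSa h. exists S; split; auto; split; auto.
  intros w [hw hwsd]. destruct (classic (sgt D1A w S)) as [g|g]; auto.
  left. destruct (sgt1_orig w S (proj1 hw) (proj1 hS) g) as [hw1 _]. apply h; auto. apply (proj2 hw).
Qed.

Lemma X3 y : In y (rules D1) -> rhead y = compl q -> allP E Plus u' (mG y) -> G3.
Proof.
  intros hy hyq ha. apply (X1 y); [apply inR1_of_orig; auto| |].
  - apply baP'; [apply in1_D1A; auto|]. apply allP_mG; auto.
  - intros w hw hwsd hwq g. apply (HcP' y hy); auto.
    + apply ha, mG_body_c.
    + rewrite hyq, compl_compl; auto.
    + destruct (sgt1_orig w y (in1_D1A _ hw) (in1_D1A _ hy) g); tauto.
Qed.

Hypothesis H : forall R, inRsd D2A q R -> someM E u R \/ E (Plus, tDelta, compl q) \/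
  exists S, inR D2A (compl q) S /\ allP E Plus u' S /\ ~ sgt D2A R S.

Lemma L : forall x, In x (rules D1) -> is_sd x -> rhead x = q -> ~ someM C1 t x ->
  C1 (Plus, tDelta, compl q) \/ G3.
Proof.
  assert (hbc : base (compl q)) by (apply base_compl; auto).
  apply (up_ind (fun x => is_sd x -> rhead x = q -> ~ someM C1 t x -> _)).
  intros x hx IH hxsd hxq hnf.
  destruct (H (mG x)) as [h|[h|[S [hS [hSa hSg]]]]].
  { split; [rewrite <- hxq; apply inR2_mG; auto|apply mG_sd]. }
  - destruct h as [a [ha hea]]. apply mG_body in ha as [ha|[->|[s [hs [e ->]]]]].
    + exfalso; apply hnf; exists a; split; auto. apply Hu; auto. eapply rule1_body_base; eauto.
    + destruct (HcM x hx hea) as [y [hy [hyh [hyx hya]]]].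
      destruct (classic (exists w, In w (rules D1) /\ is_sd w /\ rhead w = q /\
                   In (rlabel w, rlabel y) (sup D1) /\ ~ someM C1 t w)) as [[w [hw [hwsd [hwq [hwy hwn]]]]]|hno].
      * apply (IH w hw); auto. eapply t_trans; apply t_step; eauto.
      * right; apply (X1 y); auto; [apply inR1_of_orig; auto; rewrite hyh, hxq; auto|].
        intros w hw hwsd hwq g. destruct (classic (someM C1 t w)) as [|n]; auto.
        exfalso; apply hno; exists w; repeat split; auto.
        destruct (sgt1_orig w y (in1_D1A _ hw) (in1_D1A _ hy) g); tauto.
    + destruct (HbM s hs hea) as [hsa hsw].
      right; apply (X1 s); auto; [apply inR1_of_orig; auto; rewrite e, hxq; auto|].
      intros w hw hwsd hwq g. apply hsw; auto.
      * rewrite hwq, e, hxq, compl_compl; auto.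
      * destruct (sgt1_orig w s (in1_D1A _ hw) (in1_D1A _ hs) g); tauto.
  - left; apply HD; auto.
  - apply inR2_base in hS as [hS|[y [hy [hysd [hyq ->]]]]]; auto.
    + pose proof (proj1 hS) as hS0; apply in_rules_D1A in hS0 as [hS1|hS1].
      * exfalso; apply hSg, sgt2_mG_l; auto.
      * right; apply (X1 S); auto; [apply baP'; auto; apply (proj1 hS)|].
        intros w _ _ _ g; exfalso; exact (sgt1_A_r _ _ hS1 g).
    + right; apply (X3 y); auto.
Qed.

Lemma BM_core : C1 (Minus, tDelta, q) -> minus_amb D1A C1 t t' q.
Proof.
  assert (hbc : base (compl q)) by (apply base_compl; auto).
  intros hD; split; auto.
  destruct (classic (C1 (Plus, tDelta, compl q))) as [hp|hnp]; [right; left; auto|].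
  destruct (classic (forall r, inRsd D1A q r -> someM C1 t r)) as [hall|hn]; [left; auto|].
  right; right.
  apply not_all_ex_not in hn as [r hr].
  apply imply_to_and in hr as [[hr hrsd] hrn].
  pose proof (proj1 hr) as hr0; apply in_rules_D1A in hr0 as [hr1|hr1].
  { destruct (L r hr1 hrsd (proj2 hr) hrn); [contradiction|auto]. }
  destruct (H r) as [h|[h|[S [hS [hSa hSg]]]]].
  - split; auto; apply inR1_2; auto.
  - exfalso; apply hrn, bsM; auto; apply (proj1 hr).
  - exfalso; apply hnp, HD; auto.
  - apply inR2_base in hS as [hS|[y [hy [hysd [hyq ->]]]]]; auto.
    + pose proof (proj1 hS) as hS0; apply in_rules_D1A in hS0 as [hS1|hS1].
      * destruct (classic (exists w, In w (rules D1) /\ is_sd w /\ rhead w = q /\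
                   sgt D1A w S /\ ~ someM C1 t w)) as [[w [hw [hwsd [hwq [hwy hwn]]]]]|hno].
        -- destruct (L w hw hwsd hwq hwn); [contradiction|auto].
        -- apply (X1 S); auto; [apply baP'; auto; apply (proj1 hS)|].
           intros w hw hwsd hwq g. destruct (classic (someM C1 t w)) as [|n]; auto.
           exfalso; apply hno; exists w; auto.
      * apply (X1 S); auto; [apply baP'; auto; apply (proj1 hS)|].
        intros w _ _ _ g; exfalso; exact (sgt1_A_r _ _ hS1 g).
    + apply (X3 y); auto.
Qed.
End BMq.

Lemma BM q : base q -> minus_star D2A E u u' q -> minus_amb D1A C1 t t' q.
Proof.
  intros hb [hD H]. apply BM_core; auto.
Qed.
End Bwd.

Section BwdSig.
Variable E : concl -> Prop.
Hypothesis Hs : forall s a, base a -> E (s, tsigmaS, a) -> C1 (s, tsigma, a).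
Hypothesis Hd : forall s a, base a -> E (s, tdeltaS, a) -> C1 (s, tdelta, a).
Hypothesis HD : forall s a, base a -> E (s, tDelta, a) -> C1 (s, tDelta, a).
Hypothesis HcPs : forall x, In x (rules D1) -> E (Plus, tsigmaS, Pos (cA D1 x)) ->
  forall y, In y (rules D1) -> rhead y = compl (rhead x) -> In (rlabel y, rlabel x) (sup D1) -> someM C1 tdelta y.
Hypothesis HcMs : forall x, In x (rules D1) -> E (Minus, tsigmaS, Pos (cA D1 x)) ->
  exists y, In y (rules D1) /\ rhead y = compl (rhead x) /\ In (rlabel y, rlabel x) (sup D1) /\ allP C1 Plus tdelta y.
Hypothesis HbMs : forall x, In x (rules D1) -> ~ E (Minus, tsigmaS, Pos (bA D1 x)).

Lemma BSP q : base q -> plus_sup D2A E tsigmaS tdeltaS q -> plus_sup D1A C1 tsigma tdelta q.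
Proof.
  intros hb [h|[R [[hR hRsd] [hRa H]]]]; [left; apply HD; auto|].
  right. apply inR2_base in hR as [hR|[x [hx [hxsd [hxq ->]]]]]; auto.
  - exists R; split; [split; auto|]. split.
    + exact (tr_allP E C1 tsigmaS tsigma R (fun a hb h => Hs Plus a hb h) (proj1 hR) hRa).
    + intros s hs. destruct (H s (inR1_2 _ _ hs)) as [h|h].
      * left; exact (tr_someM E C1 tdeltaS tdelta s (fun a hb h => Hd Minus a hb h) (proj1 hs) h).
      * right; intros g; apply h, sgt1_D2A; auto.
  - exists x; split; [split; auto; apply inR1_of_orig; auto|]. split.
    + exact (tr_allP E C1 tsigmaS tsigma x (fun a hb h => Hs Plus a hb h) (in1_D1A _ hx) (allP_mG _ _ _ _ hRa)).
    + intros s hs. destruct (classic (sgt D1A s x)) as [g|g]; auto. left.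
      destruct (sgt1_orig s x (proj1 hs) (in1_D1A _ hx) g) as [hs1 [_ hs3]].
      apply (HcPs x hx); auto.
      * apply hRa, mG_body_c.
      * rewrite hxq; apply (proj2 hs).
Qed.

Lemma BSM q : base q -> minus_sup D2A E tsigmaS tdeltaS q -> minus_sup D1A C1 tsigma tdelta q.
Proof.
  intros hb [hD H]. split; [apply HD; auto|].
  intros r [hr hrsd]. pose proof (proj1 hr) as hr0; apply in_rules_D1A in hr0 as [hr1|hr1].
  - destruct (H (mG r)) as [[a [ha hea]]|[S [_ [_ g]]]].
    + split; [rewrite <- (proj2 hr); apply inR2_mG; auto|apply mG_sd].
    + apply mG_body in ha as [ha|[->|[s [hs [e ->]]]]].
      * left; exists a; split; auto. apply Hs; auto. eapply rule1_body_base; eauto.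
      * destruct (HcMs r hr1 hea) as [y [hy [hyh [hyx hya]]]].
        right; exists y; split; [apply inR1_of_orig; auto; rewrite hyh, (proj2 hr); auto|].
        split; auto. apply sgt1_of_sup; auto.
      * exfalso; exact (HbMs s hs hea).
    + exfalso; exact (sgt2_mG_r S r hr1 g).
  - destruct (H r) as [h|[S [_ [_ g]]]].
    + split; auto; apply inR1_2; auto.
    + left; exact (tr_someM E C1 tsigmaS tsigma r (fun a hb h => Hs Minus a hb h) (proj1 hr) h).
    + exfalso; exact (sgt2_A_r _ _ hr1 g).
Qed.
End BwdSig.

Definition bP tt tt' x := someM C1 tt' x \/ exists y, In y (rules D1) /\ is_sd y /\ rhead y = compl (rhead x) /\
      In (rlabel y, rlabel x) (sup D1) /\ allP C1 Plus tt y.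
Definition bM tt tt' x := allP C1 Plus tt' x /\ forall y, In y (rules D1) -> is_sd y -> rhead y = compl (rhead x) ->
      In (rlabel y, rlabel x) (sup D1) -> someM C1 tt y.
Definition cP tt' x := forall y, In y (rules D1) -> rhead y = compl (rhead x) -> In (rlabel y, rlabel x) (sup D1) -> someM C1 tt' y.
Definition cM tt' x := exists y, In y (rules D1) /\ rhead y = compl (rhead x) /\ In (rlabel y, rlabel x) (sup D1) /\ allP C1 Plus tt' y.

Section BwdGad.
Variable E : concl -> Prop.
Hypothesis HnoD : forall a, ~ base a -> ~ E (Plus, tDelta, a).

Section BwdGadStar.
Variables T T' tt tt' : tag.
Hypothesis HT : forall s a, base a -> E (s, T, a) -> C1 (s, tt, a).
Hypothesis HT' : forall s a, base a -> E (s, T', a) -> C1 (s, tt', a).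

Lemma BbP x : In x (rules D1) -> plus_star D2A E T T' (Pos (bA D1 x)) -> bP tt tt' x.
Proof.
  intros hx [h|[R [[hR _] [hRa [_ H]]]]]; [exfalso; exact (HnoD _ (notbase_bpos x hx) h)|].
  apply inR2_bpos in hR as [->|[y [hy [h1 [h2 [h3 ->]]]]]]; auto.
  - destruct (H (gF x) (inR2_gF x hx)) as [h|h].
    + left; exact (tr_someM E C1 T' tt' x (fun a hb h => HT' Minus a hb h) (in1_D1A _ hx) h).
    + exfalso; exact (nsgt_EF x hx h).
  - right; exists y; repeat split; auto.
    exact (tr_allP E C1 T tt y (fun a hb h => HT Plus a hb h) (in1_D1A _ hy) hRa).
Qed.

Lemma BbM x : In x (rules D1) -> minus_star D2A E T T' (Pos (bA D1 x)) -> bM tt tt' x.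
Proof.
  intros hx [_ H]. split.
  - destruct (H (gE x)) as [[a [[] _]]|[h|[S [hS [hSa _]]]]].
    + split; [apply inR2_gE; auto|apply sd_def; reflexivity].
    + exfalso; exact (HnoD _ (notbase_bneg x hx) h).
    + apply inR2_bneg in hS as ->; auto.
      exact (tr_allP E C1 T' tt' x (fun a hb h => HT' Plus a hb h) (in1_D1A _ hx) hSa).
  - intros y hy hysd h1 h2.
    destruct (H (gBT y x)) as [h|[h|[S [hS [_ hg]]]]].
    + split; [apply inR2_gBT; auto|apply sd_def; reflexivity].
    + exact (tr_someM E C1 T tt y (fun a hb h => HT Minus a hb h) (in1_D1A _ hy) h).
    + exfalso; exact (HnoD _ (notbase_bneg x hx) h).
    + apply inR2_bneg in hS as ->; auto. exfalso; apply hg, sgt_BTF; auto.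
Qed.

Lemma BcP x : In x (rules D1) -> plus_star D2A E T T' (Pos (cA D1 x)) -> cP tt' x.
Proof.
  intros hx [h|[R [[hR _] [hRa [_ H]]]]]; [exfalso; exact (HnoD _ (notbase_cpos x hx) h)|].
  apply inR2_cpos in hR as ->; auto.
  intros y hy h1 h2. destruct (H (gH y x) (inR2_gH y x hx hy h1 h2)) as [h|h].
  - exact (tr_someM E C1 T' tt' y (fun a hb h => HT' Minus a hb h) (in1_D1A _ hy) h).
  - exfalso; exact (nsgt_GH y x hx hy h).
Qed.

Lemma BcM x : In x (rules D1) -> minus_star D2A E T T' (Pos (cA D1 x)) -> cM tt' x.
Proof.
  intros hx [_ H].
  destruct (H (gG x)) as [[a [[] _]]|[h|[S [hS [hSa hg]]]]].
  - split; [apply inR2_gG; auto|apply sd_def; reflexivity].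
  - exfalso; exact (HnoD _ (notbase_cneg x hx) h).
  - apply inR2_cneg in hS as [->|[y [hy [h1 [h2 ->]]]]]; auto.
    + exfalso; apply hg, sgt_GK; auto.
    + exists y; repeat split; auto.
      exact (tr_allP E C1 T' tt' y (fun a hb h => HT' Plus a hb h) (in1_D1A _ hy) hSa).
Qed.
End BwdGadStar.

Hypothesis Hd : forall s a, base a -> E (s, tdeltaS, a) -> C1 (s, tdelta, a).

Lemma BcPs x : In x (rules D1) -> plus_sup D2A E tsigmaS tdeltaS (Pos (cA D1 x)) -> cP tdelta x.
Proof.
  intros hx [h|[R [[hR _] [hRa H]]]]; [exfalso; exact (HnoD _ (notbase_cpos x hx) h)|].
  apply inR2_cpos in hR as ->; auto.
  intros y hy h1 h2. destruct (H (gH y x) (inR2_gH y x hx hy h1 h2)) as [h|h].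
  - exact (tr_someM E C1 tdeltaS tdelta y (fun a hb h => Hd Minus a hb h) (in1_D1A _ hy) h).
  - exfalso; apply h, sgt_HG; auto.
Qed.

Lemma BcMs x : In x (rules D1) -> minus_sup D2A E tsigmaS tdeltaS (Pos (cA D1 x)) -> cM tdelta x.
Proof.
  intros hx [_ H].
  destruct (H (gG x)) as [[a [[] _]]|[S [hS [hSa hg]]]].
  - split; [apply inR2_gG; auto|apply sd_def; reflexivity].
  - apply inR2_cneg in hS as [->|[y [hy [h1 [h2 ->]]]]]; auto.
    + exfalso; exact (nsgt_KG x hx hg).
    + exists y; repeat split; auto.
      exact (tr_allP E C1 tdeltaS tdelta y (fun a hb h => Hd Plus a hb h) (in1_D1A _ hy) hSa).
Qed.

Lemma BbMs x : In x (rules D1) -> ~ minus_sup D2A E tsigmaS tdeltaS (Pos (bA D1 x)).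
Proof.
  intros hx [_ H].
  destruct (H (gE x)) as [[a [[] _]]|[S [hS [hSa hg]]]].
  - split; [apply inR2_gE; auto|apply sd_def; reflexivity].
  - apply inR2_bneg in hS as ->; auto. exact (nsgt_FE x hx hg).
Qed.
End BwdGad.

Definition InvBase (s : sign) (tg : tag) (a : literal) : Prop :=
  match tg with
  | tPartialS => C1 (s, tPartial, a)
  | tdeltaS => C1 (s, tdelta, a)
  | tsigmaS => C1 (s, tsigma, a)
  | _ => True
  end.
Definition InvB (x : rule) (s : sign) (tg : tag) : Prop :=
  match tg, s with
  | tPartialS, Plus => bP tPartial tPartial x
  | tPartialS, Minus => bM tPartial tPartial x
  | tdeltaS, Plus => bP tdelta tsigma x
  | tdeltaS, Minus => bM tdelta tsigma x
  | tsigmaS, Minus => False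
  | _, _ => True
  end.
Definition InvC (x : rule) (s : sign) (tg : tag) : Prop :=
  match tg, s with
  | tPartialS, Plus => cP tPartial x
  | tPartialS, Minus => cM tPartial x
  | tdeltaS, Plus => cP tsigma x
  | tdeltaS, Minus => cM tsigma x
  | tsigmaS, Plus => cP tdelta x
  | tsigmaS, Minus => cM tdelta x
  | _, _ => True
  end.
Definition Inv (c : concl) : Prop :=
  match c with (s, tg, a) =>
    (base a -> InvBase s tg a) /\
    (forall x, In x (rules D1) -> a = Pos (bA D1 x) -> InvB x s tg) /\
    (forall x, In x (rules D1) -> a = Pos (cA D1 x) -> InvC x s tg)
  end.

Lemma C1_closed c : TD D1A C1 c -> C1 c.
Proof. apply proves_closed. Qed.

Lemma bwd n : forall c, iterT D2A n c -> Inv c.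
Proof.
  induction n as [|n IH]; [intros c []|].
  set (E := iterT D2A n) in *.
  assert (HD : forall s a, base a -> E (s, tDelta, a) -> C1 (s, tDelta, a)).
  { intros s a hb h; apply delta_C; auto; exists n; auto. }
  assert (HnoD : forall a, ~ base a -> ~ E (Plus, tDelta, a)).
  { intros a hb; apply gadget_noplusDelta; auto. }
  assert (HP : forall s a, base a -> E (s, tPartialS, a) -> C1 (s, tPartial, a)).
  { intros s a hb h; exact (proj1 (IH _ h) hb). }
  assert (Hd : forall s a, base a -> E (s, tdeltaS, a) -> C1 (s, tdelta, a)).
  { intros s a hb h; exact (proj1 (IH _ h) hb). }
  assert (Hs : forall s a, base a -> E (s, tsigmaS, a) -> C1 (s, tsigma, a)).
  { intros s a hb h; exact (proj1 (IH _ h) hb). }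
  assert (IB : forall s tg x, In x (rules D1) -> E (s, tg, Pos (bA D1 x)) -> InvB x s tg).
  { intros s tg x hx h; exact (proj1 (proj2 (IH _ h)) x hx eq_refl). }
  assert (IC : forall s tg x, In x (rules D1) -> E (s, tg, Pos (cA D1 x)) -> InvC x s tg).
  { intros s tg x hx h; exact (proj2 (proj2 (IH _ h)) x hx eq_refl). }
  intros [[s tg] a] h. change (TD D2A E (s, tg, a)) in h.
  split; [|split].
  - intros hb. destruct tg; simpl; auto; apply C1_closed; destruct s; simpl in h |- *.
    + eapply (BP tPartial tPartial tPartialS tPartialS E).
      all: first [ eassumption | (intros x hx hh; exact (IB _ _ _ hx hh)) | (intros x hx hh; exact (IC _ _ _ hx hh)) ].
    + eapply (BM tPartial tPartial tPartialS tPartialS E).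
      all: first [ eassumption | (intros x hx hh; exact (IB _ _ _ hx hh)) | (intros x hx hh; exact (IC _ _ _ hx hh)) ].
    + eapply (BP tdelta tsigma tdeltaS tsigmaS E).
      all: first [ eassumption | (intros x hx hh; exact (IB _ _ _ hx hh)) | (intros x hx hh; exact (IC _ _ _ hx hh)) ].
    + eapply (BM tdelta tsigma tdeltaS tsigmaS E).
      all: first [ eassumption | (intros x hx hh; exact (IB _ _ _ hx hh)) | (intros x hx hh; exact (IC _ _ _ hx hh)) ].
    + eapply (BSP E).
      all: first [ eassumption | (intros x hx hh; exact (IB _ _ _ hx hh)) | (intros x hx hh; exact (IC _ _ _ hx hh)) ].
    + eapply (BSM E).
      all: first [ eassumption | (intros x hx hh; exact (IB _ _ _ hx hh)) | (intros x hx hh; exact (IC _ _ _ hx hh)) ].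
  - intros x hx ->. destruct tg, s; simpl; auto; simpl in h.
    + eapply BbP; eauto.
    + eapply BbM; eauto.
    + eapply BbP; eauto.
    + eapply BbM; eauto.
    + exact (BbMs E x hx h).
  - intros x hx ->. destruct tg, s; simpl; auto; simpl in h.
    + eapply BcP; eauto.
    + eapply BcM; eauto.
    + eapply BcP; eauto.
    + eapply BcM; eauto.
    + eapply BcPs; eauto.
    + eapply BcMs; eauto.
Qed.

Lemma fwd n : forall s a, base a ->
  (iterT D1A n (s, tPartial, a) -> C2 (s, tPartialS, a)) /\
  (iterT D1A n (s, tdelta, a) -> C2 (s, tdeltaS, a)) /\
  (iterT D1A n (s, tsigma, a) -> C2 (s, tsigmaS, a)).
Proof.
  induction n as [|n IH]; [simpl; tauto|].
  set (E1 := iterT D1A n) in *.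
  assert (HD : forall s a, base a -> E1 (s, tDelta, a) -> C2 (s, tDelta, a)).
  { intros s a hb h; apply delta_C; auto; exists n; auto. }
  assert (HP : forall s a, base a -> E1 (s, tPartial, a) -> C2 (s, tPartialS, a)).
  { intros s a hb; apply (IH s a hb). }
  assert (Hd : forall s a, base a -> E1 (s, tdelta, a) -> C2 (s, tdeltaS, a)).
  { intros s a hb; apply (IH s a hb). }
  assert (Hs : forall s a, base a -> E1 (s, tsigma, a) -> C2 (s, tsigmaS, a)).
  { intros s a hb; apply (IH s a hb). }
  intros s a hb; split; [|split]; intros h;
    destruct s; simpl in h.
  - eapply (FP tPartial tPartial tPartialS tPartialS E1).
    all: first [ eassumption
         | (intros ? ? hh; exact hh)
         | (intros x hx hh; eapply GcP_star; [intros ? ? hh'; exact hh'|exact hx|exact hh])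
         | (intros x hx hh; eapply GcM_star; [intros ? ? hh'; exact hh'|exact hx|exact hh])
         | (intros x hx hh; eapply GcM_sup; [exact hx|exact hh])
         | (intros x hx hh; eapply GbP_star; [intros ? ? hh'; exact hh'|exact hx|exact hh])
         | (intros x hx h1 h2; eapply GbM_star; [intros ? ? hh'; exact hh'|exact hx|exact h1|exact h2]) ].
  - eapply (FM tPartial tPartial tPartialS tPartialS E1).
    all: first [ eassumption
         | (intros ? ? hh; exact hh)
         | (intros x hx hh; eapply GcP_star; [intros ? ? hh'; exact hh'|exact hx|exact hh])
         | (intros x hx hh; eapply GcM_star; [intros ? ? hh'; exact hh'|exact hx|exact hh])
         | (intros x hx hh; eapply GcM_sup; [exact hx|exact hh])
         | (intros x hx hh; eapply GbP_star; [intros ? ? hh'; exact hh'|exact hx|exact hh])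
         | (intros x hx h1 h2; eapply GbM_star; [intros ? ? hh'; exact hh'|exact hx|exact h1|exact h2]) ].
  - eapply (FP tdelta tsigma tdeltaS tsigmaS E1).
    all: first [ eassumption
         | (intros ? ? hh; exact hh)
         | (intros x hx hh; eapply GcP_star; [intros ? ? hh'; exact hh'|exact hx|exact hh])
         | (intros x hx hh; eapply GcM_star; [intros ? ? hh'; exact hh'|exact hx|exact hh])
         | (intros x hx hh; eapply GcM_sup; [exact hx|exact hh])
         | (intros x hx hh; eapply GbP_star; [intros ? ? hh'; exact hh'|exact hx|exact hh])
         | (intros x hx h1 h2; eapply GbM_star; [intros ? ? hh'; exact hh'|exact hx|exact h1|exact h2]) ].
  - eapply (FM tdelta tsigma tdeltaS tsigmaS E1).
    all: first [ eassumption
         | (intros ? ? hh; exact hh)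
         | (intros x hx hh; eapply GcP_star; [intros ? ? hh'; exact hh'|exact hx|exact hh])
         | (intros x hx hh; eapply GcM_star; [intros ? ? hh'; exact hh'|exact hx|exact hh])
         | (intros x hx hh; eapply GcM_sup; [exact hx|exact hh])
         | (intros x hx hh; eapply GbP_star; [intros ? ? hh'; exact hh'|exact hx|exact hh])
         | (intros x hx h1 h2; eapply GbM_star; [intros ? ? hh'; exact hh'|exact hx|exact h1|exact h2]) ].
  - eapply (FSP E1).
    all: first [ eassumption
         | (intros ? ? hh; exact hh)
         | (intros x hx hh; eapply GcP_star; [intros ? ? hh'; exact hh'|exact hx|exact hh])
         | (intros x hx hh; eapply GcM_star; [intros ? ? hh'; exact hh'|exact hx|exact hh])
         | (intros x hx hh; eapply GcM_sup; [exact hx|exact hh])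
         | (intros x hx hh; eapply GbP_star; [intros ? ? hh'; exact hh'|exact hx|exact hh])
         | (intros x hx h1 h2; eapply GbM_star; [intros ? ? hh'; exact hh'|exact hx|exact h1|exact h2]) ].
  - eapply (FSM E1).
    all: first [ eassumption
         | (intros ? ? hh; exact hh)
         | (intros x hx hh; eapply GcP_star; [intros ? ? hh'; exact hh'|exact hx|exact hh])
         | (intros x hx hh; eapply GcM_star; [intros ? ? hh'; exact hh'|exact hx|exact hh])
         | (intros x hx hh; eapply GcM_sup; [exact hx|exact hh])
         | (intros x hx hh; eapply GbP_star; [intros ? ? hh'; exact hh'|exact hx|exact hh])
         | (intros x hx h1 h2; eapply GbM_star; [intros ? ? hh'; exact hh'|exact hx|exact h1|exact h2]) ].
Qed.

Lemma sigma_add q : In q (Sigma D1A) -> In q (Sigma D1) \/ In q (Sigma A).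
Proof.
  unfold Sigma; simpl; rewrite app_nil_r, flat_map_app.
  rewrite !in_app_iff; tauto.
Qed.

Lemma sigmaD1A_base q : In q (Sigma D1A) -> base q.
Proof. intros h; destruct (sigma_add q h); [apply sigma1_base|apply sigmaA_base]; auto. Qed.

Lemma main_P q s : In q (Sigma D1A) -> (C1 (s, tPartial, q) <-> C2 (s, tPartialS, q)).
Proof.
  intros hq; pose proof (sigmaD1A_base q hq) as hb; split.
  - intros [n h]; exact (proj1 (fwd n s q hb) h).
  - intros [n h]; exact (proj1 (bwd n _ h) hb).
Qed.
Lemma main_d q s : In q (Sigma D1A) -> (C1 (s, tdelta, q) <-> C2 (s, tdeltaS, q)).
Proof.
  intros hq; pose proof (sigmaD1A_base q hq) as hb; split.
  - intros [n h]; exact (proj1 (proj2 (fwd n s q hb)) h).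
  - intros [n h]; exact (proj1 (bwd n _ h) hb).
Qed.
End Main.

Theorem theorem14 :
  simulates tPartial tPartialS /\ simulates tdelta tdeltaS.
Proof.
  split; intros D1 wfD; exists (D2 D1); split; [apply D2_wf; auto| |apply D2_wf; auto|];
  intros RA A wfA modA q hq; split.
  all: first [ apply main_P; auto | apply main_d; auto ].
Qed.
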